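(* Consider the two-layer evolutionary process described in the context, with death-Birth updating in both layers, and let $\boldsymbol{\xi}=(\xi^{[1]},\xi^{[2]})\in\{0,1\}^N\times\{0,1\}^N$ be any initial state that is not one of the four states in which both layers are monomorphic. Let $\rho^{[1]}(\boldsymbol{\xi})$ be the probability that, starting from $\boldsymbol{\xi}$, layer 1 eventually consists only of cooperators. Then, under weak selection, cooperation is favored, i.e. $$\left.\frac{\mathrm{d}}{\mathrm{d}\delta}\rho^{[1]}(\boldsymbol{\xi})\right|_{\delta=0}>0,$$ if and only if $$c\,\theta_2+b\,(\theta_1-\theta_3)-(r-1)\,\phi_{2,0}>0 .$$
   Context: There are $N\ge 2$ individuals $1,\dots,N$. For each layer $L\in\{1,2\}$ there is a connected undirected weighted graph on $\{1,\dots,N\}$ with symmetric nonnegative weights $w^{[L]}_{ij}$; let $s^{[L]}_i=\sum_j w^{[L]}_{ij}>0$, $p^{[L]}_{ij}=w^{[L]}_{ij}/s^{[L]}_i$, let $P^{[L]}=(p^{[L]}_{ij})$, and let $\pi^{[L]}_i=s^{[L]}_i/\sum_k s^{[L]}_k$. A state is $\mathbf{x}=(x^{[1]},x^{[2]})\in\{0,1\}^N\times\{0,1\}^N$; $x^{[1]}_i=1$ ($0$) means individual $i$ is a cooperator (defector) in layer 1, and $x^{[2]}_i=1$ ($0$) means $i$ is a mutant (resident) in layer 2. With parameters $b,c$ and $r\ge 0$, the payoff of $i$ is $u_i=u^{[1]}_i+u^{[2]}_i$, where $u^{[1]}_i=-c\,x^{[1]}_i+\sum_j b\,p^{[1]}_{ij}x^{[1]}_j$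 (donation game) and $u^{[2]}_i=(r-1)x^{[2]}_i+1$ (constant selection). The fecundity is $F_i=1+\delta u_i$, with selection strength $\delta\ge0$. In each time step, simultaneously and independently in each layer $L$: an individual $i$ is chosen uniformly at random, then $j$ is chosen with probability $w^{[L]}_{ij}F_j/\sum_k w^{[L]}_{ik}F_k$, and $x^{[L]}_i$ is replaced by $x^{[L]}_j$ (death-Birth rule in both layers). Let $\hat\xi^{[L]}=\sum_i\pi^{[L]}_i\xi^{[L]}_i$. Let $(\beta_{ij})$ be the unique solution of: $\beta_{ii}=N(\xi^{[1]}_i-\hat\xi^{[1]})+\sum_k p^{[1]}_{ik}\beta_{kk}$ for all $i$; $\beta_{ij}=\tfrac N2(\xi^{[1]}_i\xi^{[1]}_j-\hat\xi^{[1]})+\tfrac12\sum_k p^{[1]}_{ik}\beta_{kj}+\tfrac12\sum_k p^{[1]}_{jk}\beta_{ik}$ for $i\ne j$; and $\sum_i\pi^{[1]}_i\beta_{ii}=0$. Let $(\gamma_{ij})$ be the unique solution of: for all $i,j$, $\gamma_{ij}=\frac{N^2}{2N-1}(\xi^{[1]}_i\xi^{[2]}_j-\hat\xi^{[1]}\hat\xi^{[2]})+\frac{1}{2N-1}\sum_{k_1,k_2}p^{[1]}_{ik_1}p^{[2]}_{jk_2}\gamma_{k_1k_2}+\frac{N-1}{2N-1}\Big(\sum_{k}p^{[1]}_{ik}\gamma_{kj}+\sum_k p^{[2]}_{jk}\gamma_{ik}\Big)$, together with $\sum_i\pi^{[1]}_i\gamma_{ii}=0$. Define $\theta_n=\sum_{i,j}\pi^{[1]}_i\big((P^{[1]})^n\big)_{ij}\beta_{ij}$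 and $\phi_{n,m}=\sum_{i,j}\pi^{[1]}_i\big((P^{[1]})^n(P^{[2]})^m\big)_{ij}\gamma_{ij}$. *)

(* Defs.v *)
From HB Require Import structures.
From mathcomp Require Import all_boot all_order all_algebra.
From mathcomp Require Import all_classical all_reals all_analysis.
Set Implicit Arguments.
Unset Strict Implicit.
Unset Printing Implicit Defensive.
Import Order.TTheory GRing.Theory Num.Theory.
Import numFieldNormedType.Exports.
Local Open Scope classical_set_scope.
Local Open Scope ring_scope.

Section TwoLayer.
Variable R : realType.
Variable N : nat.

Definition b2r (x : bool) : R := (x : nat)%:R.

Definition strength (w : 'M[R]_N) (i : 'I_N) : R := \sum_(j < N) w i j.

Definition transP (w : 'M[R]_N) : 'M[R]_N :=
  \matrix_(i < N, j < N) (w i j / strength w i).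

Definition statdist (w : 'M[R]_N) (i : 'I_N) : R :=
  strength w i / \sum_(k < N) strength w k.

Definition avg (w : 'M[R]_N) (z : {ffun 'I_N -> bool}) : R :=
  \sum_(i < N) statdist w i * b2r (z i).

Definition weighted_graph (w : 'M[R]_N) : Prop :=
  [/\ forall i j, w i j = w j i,
      forall i j, 0 <= w i j,
      forall i, 0 < strength w i &
      forall i j, connect (fun k l => 0 < w k l) i j].

Definition state : Type := ({ffun 'I_N -> bool} * {ffun 'I_N -> bool})%type.

Definition monomorphic (z : {ffun 'I_N -> bool}) : bool :=
  [forall i, forall j, z i == z j].

(* u_i = u^[1]_i + u^[2]_i *)
Definition payoff (w1 : 'M[R]_N) (b c r : R) (x : state) (i : 'I_N) : R :=
  (- c * b2r (x.1 i) + \sum_(j < N) b * transP w1 i j * b2r (x.1 j))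
  + ((r - 1) * b2r (x.2 i) + 1).

Definition fecundity (w1 : 'M[R]_N) (b c r delta : R) (x : state) (i : 'I_N) : R :=
  1 + delta * payoff w1 b c r x i.

Definition replace (z : {ffun 'I_N -> bool}) (i : 'I_N) (v : bool) :
  {ffun 'I_N -> bool} := [ffun k => if k == i then v else z k].

Definition layer_trans (w : 'M[R]_N) (F : 'I_N -> R)
    (z z' : {ffun 'I_N -> bool}) : R :=
  \sum_(i < N) (N%:R)^-1 *
    \sum_(j < N) (if z' == replace z i (z j)
                  then w i j * F j / \sum_(k < N) w i k * F k else 0).

Definition trans (w1 w2 : 'M[R]_N) (b c r delta : R) (x y : state) : R :=
  layer_trans w1 (fecundity w1 b c r delta x) x.1 y.1 *
  layer_trans w2 (fecundity w1 b c r delta x) x.2 y.2.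

Definition allC (x : state) : bool := [forall i, x.1 i].

Fixpoint hit_by (w1 w2 : 'M[R]_N) (b c r delta : R) (t : nat) (x : state) : R :=
  if allC x then 1 else
  match t with
  | 0 => 0
  | t'.+1 => \sum_(y : state) trans w1 w2 b c r delta x y * hit_by w1 w2 b c r delta t' y
  end.

Definition rho1 (w1 w2 : 'M[R]_N) (b c r delta : R) (xi : state) : R :=
  lim ((fun t => hit_by w1 w2 b c r delta t xi) @ \oo).

Definition beta_eqs (w1 : 'M[R]_N) (xi1 : {ffun 'I_N -> bool}) (beta : 'M[R]_N) : Prop :=
  [/\ forall i, beta i i = N%:R * (b2r (xi1 i) - avg w1 xi1)
                           + \sum_(k < N) transP w1 i k * beta k k,
      forall i j, i != j ->
        beta i j = N%:R / 2 * (b2r (xi1 i) * b2r (xi1 j) - avg w1 xi1)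
                   + 2^-1 * \sum_(k < N) transP w1 i k * beta k j
                   + 2^-1 * \sum_(k < N) transP w1 j k * beta i k &
      \sum_(i < N) statdist w1 i * beta i i = 0].

Definition gamma_eqs (w1 w2 : 'M[R]_N) (xi : state) (gamma : 'M[R]_N) : Prop :=
  (forall i j,
     gamma i j = (N%:R ^+ 2) / (2 * N%:R - 1)
                   * (b2r (xi.1 i) * b2r (xi.2 j) - avg w1 xi.1 * avg w2 xi.2)
               + (2 * N%:R - 1)^-1
                   * \sum_(k1 < N) \sum_(k2 < N)
                       transP w1 i k1 * transP w2 j k2 * gamma k1 k2
               + (N%:R - 1) / (2 * N%:R - 1)
                   * (\sum_(k < N) transP w1 i k * gamma k j
                      + \sum_(k < N) transP w2 j k * gamma i k))
  /\ \sum_(i < N) statdist w1 i * gamma i i = 0.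

Definition theta (w1 beta : 'M[R]_N) (n : nat) : R :=
  \sum_(i < N) \sum_(j < N) statdist w1 i * (transP w1 ^+ n) i j * beta i j.

Definition phi (w1 w2 gamma : 'M[R]_N) (n m : nat) : R :=
  \sum_(i < N) \sum_(j < N)
    statdist w1 i * ((transP w1 ^+ n) *m (transP w2 ^+ m)) i j * gamma i j.

End TwoLayer.

(* Main.v *)
Require Import Defs.
From HB Require Import structures.
From mathcomp Require Import all_boot all_order all_algebra.
From mathcomp Require Import all_classical all_reals all_analysis.
From mathcomp Require Import ring lra zify.
Import Order.TTheory GRing.Theory Num.Theory.
Import numFieldNormedType.Exports.
Local Open Scope classical_set_scope.
Local Open Scope ring_scope.
Set Implicit Arguments.
Unset Strict Implicit.
Unset Printing Implicit Defensive.
Section Basic.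
Variable R : realType.
Variable N : nat.

Lemma b2r1 : b2r R true = 1. Proof. by rewrite /b2r. Qed.
Lemma b2r0 : b2r R false = 0. Proof. by rewrite /b2r. Qed.
Lemma b2rK (x : bool) : b2r R x * b2r R x = b2r R x.
Proof. by case: x; rewrite /b2r /= ?mulr1 ?mulr0. Qed.
Lemma b2r_ge0 (x : bool) : 0 <= b2r R x.
Proof. by case: x; rewrite /b2r. Qed.

Lemma sum_delta (F : 'I_N -> R) a : \sum_i ((a == i)%:R * F i) = F a.
Proof.
rewrite (bigD1 a) //= eqxx mul1r big1 ?addr0 // => i /negbTE.
by rewrite eq_sym => ->; rewrite mul0r.
Qed.

Lemma sum_delta' (F : 'I_N -> R) a : \sum_i ((i == a)%:R * F i) = F a.
Proof. by rewrite -(sum_delta F a); apply: eq_bigr => i _; rewrite eq_sym. Qed.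

Lemma replaceE (z : {ffun 'I_N -> bool}) i v k :
  b2r R (replace z i v k) = b2r R (z k) + (k == i)%:R * (b2r R v - b2r R (z k)).
Proof.
rewrite /replace ffunE; case: eqP => [->|_]; rewrite ?mul1r ?mul0r ?addr0 //.
by rewrite addrC subrK.
Qed.

Variable w : 'M[R]_N.
Hypothesis hw : weighted_graph w.

Lemma strength_gt0 i : 0 < strength w i.
Proof. by case: hw. Qed.
Lemma w_ge0 i j : 0 <= w i j.
Proof. by case: hw. Qed.
Lemma w_sym i j : w i j = w j i.
Proof. by case: hw. Qed.

Lemma transP_ge0 i j : 0 <= transP w i j.
Proof. by rewrite /transP mxE divr_ge0 ?w_ge0 // ltW // strength_gt0. Qed.

Lemma transP_sum1 i : \sum_j transP w i j = 1.
Proof.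
under eq_bigr do rewrite /transP mxE.
by rewrite -big_distrl /= -/(strength w i) divff // gt_eqF // strength_gt0.
Qed.

Hypothesis hN : (0 < N)%N.
Let k0 : 'I_N := Ordinal hN.

Lemma total_gt0 : 0 < \sum_k strength w k.
Proof.
apply: (lt_le_trans (strength_gt0 k0)); rewrite (bigD1 k0) //= lerDl.
by apply: sumr_ge0 => k _; apply: ltW; apply: strength_gt0.
Qed.

Lemma statdist_ge0 i : 0 <= statdist w i.
Proof. by rewrite /statdist divr_ge0 // ltW ?strength_gt0 ?total_gt0. Qed.

Lemma statdist_sum1 : \sum_i statdist w i = 1.
Proof. by rewrite /statdist -big_distrl /= divff // gt_eqF // total_gt0. Qed.

Lemma statdist_rev i j :
  statdist w i * transP w i j = statdist w j * transP w j i.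
Proof.
rewrite /statdist /transP !mxE.
have si := strength_gt0 i; have sj := strength_gt0 j; have t := total_gt0.
rewrite (w_sym j i); field.
by rewrite !gt_eqF.
Qed.

Lemma statdist_stat j : \sum_i statdist w i * transP w i j = statdist w j.
Proof.
under eq_bigr do rewrite statdist_rev.
by rewrite -big_distrr /= transP_sum1 mulr1.
Qed.

Lemma transPX_sum1 n i : \sum_j (transP w ^+ n) i j = 1.
Proof.
elim: n i => [|n IH] i.
  rewrite expr0; under eq_bigr do rewrite mxE -[_%:R]mulr1.
  exact: sum_delta.
rewrite exprS.
under eq_bigr do rewrite -mulmxE mxE.
rewrite exchange_big /=.
under eq_bigr do rewrite -big_distrr /= IH mulr1.
exact: transP_sum1.
Qed.

Lemma statdist_statX n j : \sum_i statdist w i * (transP w ^+ n) i j = statdist w j.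
Proof.
elim: n j => [|n IH] j.
  rewrite expr0 (eq_bigr (fun i => (i == j)%:R * statdist w i)) ?sum_delta' // => i _.
  by rewrite mxE mulrC.
rewrite exprSr.
under eq_bigr do rewrite -mulmxE mxE big_distrr.
rewrite exchange_big /=.
rewrite -[RHS](statdist_stat j); apply: eq_bigr => k _.
by rewrite -IH big_distrl; apply: eq_bigr => i _; rewrite mulrA.
Qed.

End Basic.
Section Layer.
Variable R : realType.
Variable N : nat.
Hypothesis hN : (0 < N)%N.
Variable w : 'M[R]_N.
Hypothesis hw : weighted_graph w.
Variable F : 'I_N -> R.

Definition ew i j := w i j * F j / \sum_(k < N) w i k * F k.

Lemma lt_sum z0 (f : {ffun 'I_N -> bool} -> R) :
  \sum_z layer_trans w F z0 z * f z =
  \sum_i N%:R^-1 * \sum_j ew i j * f (replace z0 i (z0 j)).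
Proof.
rewrite /layer_trans.
under eq_bigr do rewrite big_distrl /=.
rewrite exchange_big /=; apply: eq_bigr => i _.
under eq_bigr do rewrite -mulrA big_distrl /=.
rewrite -big_distrr /=; congr (_ * _).
rewrite exchange_big /=; apply: eq_bigr => j _.
rewrite (bigD1 (replace z0 i (z0 j))) //= eqxx [X in _ + X]big1 ?addr0 //.
by move=> z /negbTE ->; rewrite mul0r.
Qed.

Hypothesis Fpos : forall j, 0 < F j.

Lemma den_gt0 i : 0 < \sum_(k < N) w i k * F k.
Proof.
rewrite lt_def sumr_ge0 ?andbT; last by move=> k _; rewrite mulr_ge0 ?w_ge0 // ltW.
apply/negP => /eqP/psumr_eq0P H.
have {}H : forall k, w i k * F k = 0.
  by move=> k; apply: H => // l _; rewrite mulr_ge0 ?w_ge0 // ltW.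
have : strength w i = 0.
  rewrite /strength big1 // => k _.
  have /eqP := H k; rewrite mulf_eq0 => /orP[/eqP //|]; by rewrite gt_eqF.
by move/eqP; rewrite gt_eqF // strength_gt0.
Qed.

Lemma ew_ge0 i j : 0 <= ew i j.
Proof. by rewrite /ew divr_ge0 ?mulr_ge0 ?w_ge0 // ltW ?den_gt0. Qed.

Lemma ew_sum1 i : \sum_j ew i j = 1.
Proof. by rewrite /ew -big_distrl /= divff // gt_eqF // den_gt0. Qed.

Lemma sum_invN : \sum_(i < N) N%:R^-1 = 1 :> R.
Proof.
by rewrite sumr_const card_ord -[LHS]mulr_natr mulVf // pnatr_eq0 -lt0n.
Qed.

Lemma lt_sum1 z0 : \sum_z layer_trans w F z0 z = 1.
Proof.
have -> : \sum_z layer_trans w F z0 z = \sum_z layer_trans w F z0 z * (fun _ => 1) z.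
  by apply: eq_bigr => z _; rewrite mulr1.
rewrite lt_sum.
under eq_bigr do under eq_bigr do rewrite mulr1.
under eq_bigr do rewrite ew_sum1 mulr1.
exact: sum_invN.
Qed.

Lemma lt_ge0 z0 z : 0 <= layer_trans w F z0 z.
Proof.
apply: sumr_ge0 => i _; apply: mulr_ge0; first by rewrite invr_ge0.
by apply: sumr_ge0 => j _; case: ifP => // _; apply: ew_ge0.
Qed.

Lemma mono_replace (z : {ffun 'I_N -> bool}) i j :
  monomorphic z -> replace z i (z j) = z.
Proof.
move=> /forallP H; apply/ffunP => k; rewrite ffunE.
case: eqP => // ->; apply/eqP; rewrite eq_sym; exact: (forallP (H i) j).
Qed.

Lemma lt_mono z0 z : monomorphic z0 -> layer_trans w F z0 z = (z == z0)%:R.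
Proof.
move=> m; rewrite /layer_trans.
under eq_bigr do under eq_bigr do rewrite mono_replace //.
case: eqP => _; last by rewrite big1 // => i _; rewrite big1 ?mulr0.
under eq_bigr do rewrite -/(ew _ _) ew_sum1 mulr1.
exact: sum_invN.
Qed.

Lemma lt_lower z0 i j :
  N%:R^-1 * ew i j <= layer_trans w F z0 (replace z0 i (z0 j)).
Proof.
rewrite /layer_trans (bigD1 i) //= -[X in X <= _]addr0 lerD //; last first.
  apply: sumr_ge0 => k _; apply: mulr_ge0; first by rewrite invr_ge0.
  by apply: sumr_ge0 => l _; case: ifP => // _; apply: ew_ge0.
apply: ler_wpM2l; first by rewrite invr_ge0.
rewrite (bigD1 j) //= eqxx -[X in X <= _]addr0 lerD //.
by apply: sumr_ge0 => l _; case: ifP => // _; apply: ew_ge0.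
Qed.

End Layer.
Lemma cvg_sum_fun (R : realType) (T : Type) (F : set_system T) (FF : Filter F)
  (I : eqType) (s : seq I) (P : pred I) (f : I -> T -> R) (l : I -> R) :
  (forall i, P i -> f i x @[x --> F] --> l i) ->
  (\sum_(i <- s | P i) f i x) @[x --> F] --> \sum_(i <- s | P i) l i.
Proof.
move=> H; elim: s => [|a s IH].
  under eq_fun do rewrite big_nil.
  by rewrite big_nil; exact: cvg_cst.
under eq_fun do rewrite big_cons.
rewrite big_cons; case: ifP => Pa //.
exact: cvgD (H a Pa) IH.
Qed.

Lemma cvg_prod_fun (R : realType) (T : Type) (F : set_system T) (FF : Filter F)
  (I : eqType) (s : seq I) (P : pred I) (f : I -> T -> R) (l : I -> R) :
  (forall i, P i -> f i x @[x --> F] --> l i) ->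
  (\prod_(i <- s | P i) f i x) @[x --> F] --> \prod_(i <- s | P i) l i.
Proof.
move=> H; elim: s => [|a s IH].
  under eq_fun do rewrite big_nil.
  by rewrite big_nil; exact: cvg_cst.
under eq_fun do rewrite big_cons.
rewrite big_cons; case: ifP => Pa //.
exact: cvgM (H a Pa) IH.
Qed.

Lemma limE (R : realType) (T : Type) (F : set_system T) (FF : ProperFilter F)
  (f : T -> R) (l : R) : f x @[x --> F] --> l -> lim (f x @[x --> F]) = l.
Proof. exact: cvg_lim. Qed.

Section Chain.
Variable R : realType.
Variable N : nat.
Hypothesis hN : (0 < N)%N.
Variables w1 w2 : 'M[R]_N.
Hypothesis hw1 : weighted_graph w1.
Hypothesis hw2 : weighted_graph w2.
Variables b c r : R.

Definition good (d : R) := forall (x : state N) j, 0 < fecundity w1 b c r d x j.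

Lemma good0 : good 0.
Proof. by move=> x j; rewrite /fecundity mul0r addr0. Qed.

Lemma T_prod d x (f1 f2 : {ffun 'I_N -> bool} -> R) :
  \sum_(y : state N) trans w1 w2 b c r d x y * (f1 y.1 * f2 y.2) =
  (\sum_z layer_trans w1 (fecundity w1 b c r d x) x.1 z * f1 z) *
  (\sum_z layer_trans w2 (fecundity w1 b c r d x) x.2 z * f2 z).
Proof.
rewrite big_distrl /=.
under eq_bigr do rewrite big_distrr /=.
rewrite pair_big /=; apply: eq_bigr => [[y1 y2]] _ /=.
by rewrite /trans /= mulrACA.
Qed.

Variable d : R.
Hypothesis gd : good d.

Local Notation T := (trans w1 w2 b c r d).
Local Notation hit := (hit_by w1 w2 b c r d).

Lemma T_ge0 x y : 0 <= T x y.
Proof. by rewrite /trans mulr_ge0 // lt_ge0. Qed.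

Lemma T_sum1 x : \sum_y T x y = 1.
Proof.
have -> : \sum_y T x y = \sum_y T x y * ((fun _ => 1) y.1 * (fun _ => 1) y.2).
  by apply: eq_bigr => y _; rewrite !mulr1.
rewrite (T_prod d x (fun _ => 1) (fun _ => 1)).
have h1 := lt_sum1 hN hw1 (gd x) x.1.
have h2 := lt_sum1 hN hw2 (gd x) x.2.
by under eq_bigr do rewrite mulr1; under [X in _ * X]eq_bigr do rewrite mulr1; rewrite h1 h2 mulr1.
Qed.

Lemma allC_mono (x : state N) : allC x -> monomorphic x.1.
Proof.
move=> /forallP H; apply/forallP => i; apply/forallP => j.
by rewrite (H i) (H j).
Qed.

Lemma hit_allC t x : allC x -> hit t x = 1.
Proof. by case: t => [|t] /= ->. Qed.

Lemma hit_succ t x : hit t.+1 x = \sum_y T x y * hit t y.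
Proof.
case: (boolP (allC x)) => hx; last by rewrite /= (negbTE hx).
rewrite hit_allC //.
have m := allC_mono hx.
have -> : \sum_y T x y * hit t y = \sum_y T x y * ((fun z => (z == x.1)%:R) y.1 * (fun _ => 1) y.2).
  apply: eq_bigr => -[y1 y2] _ /=; rewrite mulr1 /trans /= (lt_mono hN hw1 (gd x) _ m).
  case: eqP => [->|_]; last by rewrite !mul0r.
  by rewrite hit_allC.
rewrite (T_prod d x (fun z => (z == x.1)%:R) (fun _ => 1)).
under eq_bigr do rewrite (lt_mono hN hw1 (gd x) _ m).
rewrite (bigD1 x.1) //= eqxx mulr1 big1 ?addr0; last by move=> z /negbTE ->; rewrite mul0r.
under eq_bigr do rewrite mulr1.
by rewrite mul1r (lt_sum1 hN hw2 (gd x)).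
Qed.

Lemma hit_bounds t x : 0 <= hit t x <= 1.
Proof.
elim: t x => [|t IH] x.
  by rewrite /=; case: ifP => _; rewrite ?ler01 ?lexx.
rewrite hit_succ; apply/andP; split.
  by apply: sumr_ge0 => y _; rewrite mulr_ge0 ?T_ge0 //; case/andP: (IH y).
rewrite -(T_sum1 x); apply: ler_sum => y _.
by rewrite ler_piMr ?T_ge0 //; case/andP: (IH y).
Qed.

Lemma hit_mono t x : hit t x <= hit t.+1 x.
Proof.
elim: t x => [|t IH] x.
  case: (boolP (allC x)) => hx; first by rewrite !hit_allC.
  have -> : hit 0 x = 0 by rewrite /= (negbTE hx).
  by case/andP: (hit_bounds 1 x).
rewrite (hit_succ t.+1) (hit_succ t); apply: ler_sum => y _.
by apply: ler_wpM2l; [apply: T_ge0 | apply: IH].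
Qed.

Lemma hit_cvg x : hit t x @[t --> \oo] --> rho1 w1 w2 b c r d x.
Proof.
have H : hit t x @[t --> \oo] --> sup (range (fun t => hit t x)).
  apply: nondecreasing_cvgn.
    by apply/nondecreasing_seqP => t; apply: hit_mono.
  by exists 1 => _ [t _ <-]; case/andP: (hit_bounds t x).
by rewrite /rho1 (cvg_lim _ H).
Qed.

Local Notation rho := (rho1 w1 w2 b c r d).

Lemma rho_harm x : rho x = \sum_y T x y * rho y.
Proof.
have H1 : (fun t => hit t.+1 x) @ \oo --> rho x.
  by have := hit_cvg (x := x); rewrite -cvg_shiftS.
have H2 : (fun t => \sum_y T x y * hit t y) @ \oo --> \sum_y T x y * rho y.
  apply: cvg_sum_fun => y _; apply: cvgM; [exact: cvg_cst | exact: hit_cvg].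
have E : (fun t => hit t.+1 x) = (fun t => \sum_y T x y * hit t y).
  by apply: funext => t; rewrite hit_succ.
rewrite E in H1.
by rewrite -(limE _ H1) (limE _ H2).
Qed.

Lemma mono_val (z : {ffun 'I_N -> bool}) i k : monomorphic z -> z i = z k.
Proof. by move=> /forallP H; apply/eqP; exact: (forallP (H i) k). Qed.

Lemma T_absorb x y : monomorphic x.1 -> monomorphic x.2 -> T x y = (y == x)%:R.
Proof.
move=> m1 m2; rewrite /trans (lt_mono hN hw1 (gd x) _ m1) (lt_mono hN hw2 (gd x) _ m2).
case: x y m1 m2 => [x1 x2] [y1 y2] /= _ _.
by rewrite xpair_eqE; case: eqP; case: eqP; rewrite /= ?mulr1 ?mulr0 ?mul0r.
Qed.

Lemma avg_mono (z : {ffun 'I_N -> bool}) (w : 'M[R]_N) : weighted_graph w ->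
  monomorphic z -> avg w z = ([forall i, z i] : bool)%:R.
Proof.
move=> hw m; rewrite /avg; case: (boolP [forall i, z i]) => H.
  under eq_bigr do rewrite (forallP H) b2r1 mulr1.
  by rewrite statdist_sum1.
have [k /negP Hk] : exists k, ~~ z k by apply/existsP; rewrite -negb_forall.
rewrite big1 // => i _; rewrite (mono_val i k m).
by move: Hk; case: (z k) => // _; rewrite b2r0 mulr0.
Qed.

Lemma rho_offW x : monomorphic x.1 -> monomorphic x.2 -> rho x = avg w1 x.1.
Proof.
move=> m1 m2.
have Hc : forall t, hit t x = hit 0 x.
  elim=> [//|t IH]; rewrite hit_succ -IH.
  under eq_bigr do rewrite T_absorb //.
  rewrite (bigD1 x) //= eqxx mul1r big1 ?addr0 // => y /negbTE ->.
  by rewrite mul0r.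
have H : hit t x @[t --> \oo] --> hit 0 x.
  by under eq_fun do rewrite Hc; exact: cvg_cst.
rewrite -(limE _ (hit_cvg (x := x))) (limE _ H) /= (avg_mono hw1 m1).
rewrite /allC /=; by case: ifP.
Qed.

End Chain.
Lemma fin_max (R : realType) (I : finType) (i0 : I) (f : I -> R) :
  exists i, forall j, f j <= f i.
Proof.
case: (@arg_maxP _ _ _ i0 xpredT f isT) => i _ H.
by exists i => j; apply: H.
Qed.

Lemma path_edge (I : eqType) (e : rel I) (z : I -> bool) p a :
  ~~ z a -> path e a p -> z (last a p) -> exists i j, [/\ e i j, ~~ z i & z j].
Proof.
elim: p a => [|x p IH] a /= za; first by rewrite (negbTE za).
case/andP=> eax pxp zl.
case: (boolP (z x)) => zx; first by exists a, x.
exact: IH zx pxp zl.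
Qed.

Section Graph.
Variable R : realType.
Variable N : nat.
Variable w : 'M[R]_N.
Hypothesis hw : weighted_graph w.

Lemma conn i j : connect (fun k l => 0 < w k l) i j.
Proof. by case: hw. Qed.

Lemma nonmono_edge (z : {ffun 'I_N -> bool}) :
  ~~ monomorphic z -> exists i j, [/\ 0 < w i j, ~~ z i & z j].
Proof.
rewrite negb_forall => /existsP [a]; rewrite negb_forall => /existsP [a' H].
have [[u v] [zu zv]] : exists uv : 'I_N * 'I_N, ~~ z uv.1 /\ z uv.2.
  by case: (boolP (z a)) => za; [exists (a', a) | exists (a, a')];
     move: H za; case: (z a); case: (z a').
have /connectP [p pp lp] := conn u v.
have := @path_edge _ (fun k l => 0 < w k l) z p u zu pp.
by rewrite -lp => /(_ zv).
Qed.

Lemma some_edge i : exists j, 0 < w i j.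
Proof.
case: (boolP [exists j, 0 < w i j]) => [/existsP //|].
rewrite negb_exists => /forallP H.
have : strength w i <= 0.
  by rewrite /strength; apply: sumr_le0 => j _; rewrite leNgt H.
by rewrite leNgt strength_gt0.
Qed.

Lemma ew_gt0 (F : 'I_N -> R) (Fpos : forall j, 0 < F j) i j :
  0 < w i j -> 0 < ew w F i j.
Proof.
by move=> h; rewrite /ew divr_gt0 ?mulr_gt0 ?Fpos // (den_gt0 hw Fpos).
Qed.

Definition npot (z : {ffun 'I_N -> bool}) : nat := \sum_k (~~ z k : nat).

Lemma npot_replace (z : {ffun 'I_N -> bool}) i j :
  ~~ z i -> z j -> (npot (replace z i (z j)) < npot z)%N.
Proof.
move=> zi zj; rewrite /npot (bigD1 i) //= [X in (_ < X)%N](bigD1 i) //= zi.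
rewrite /replace ffunE eqxx zj /= add0n add1n ltnS.
rewrite leq_eqVlt; apply/orP; left; apply/eqP; apply: eq_bigr => k /negbTE kn.
by rewrite ffunE kn.
Qed.

End Graph.
Section MaxPrin.
Variable R : realType.
Variable N : nat.
Hypothesis hN : (0 < N)%N.
Variables w1 w2 : 'M[R]_N.
Hypothesis hw1 : weighted_graph w1.
Hypothesis hw2 : weighted_graph w2.
Variables b c r : R.

Definition inW (x : state N) : bool := ~~ (monomorphic x.1 && monomorphic x.2).
Definition pot (x : state N) : nat := npot x.1 + npot x.2.

Lemma layer_step (w : 'M[R]_N) (hw : weighted_graph w) (z : {ffun 'I_N -> bool}) :
  exists i j, 0 < w i j /\
    (if monomorphic z then replace z i (z j) = z
     else (npot (replace z i (z j)) < npot z)%N).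
Proof.
case: (boolP (monomorphic z)) => m.
  have [j hj] := some_edge hw (Ordinal hN).
  by exists (Ordinal hN), j; split => //; rewrite mono_replace.
have [i [j [hij zi zj]]] := nonmono_edge hw m.
by exists i, j; split => //; apply: npot_replace.
Qed.

Local Notation T0 := (trans w1 w2 b c r 0).

Lemma lt_pos (w : 'M[R]_N) (hw : weighted_graph w) (F : 'I_N -> R)
  (Fpos : forall j, 0 < F j) z i j :
  0 < w i j -> 0 < layer_trans w F z (replace z i (z j)).
Proof.
move=> h; apply: lt_le_trans (lt_lower hw Fpos z i j).
by rewrite mulr_gt0 ?invr_gt0 ?ltr0n // (ew_gt0 hw Fpos).
Qed.

Lemma step_exists x : inW x -> exists y, 0 < T0 x y /\ (pot y < pot x)%N.
Proof.
move=> hx.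
have [i1 [j1 [h1 s1]]] := layer_step hw1 x.1.
have [i2 [j2 [h2 s2]]] := layer_step hw2 x.2.
exists (replace x.1 i1 (x.1 j1), replace x.2 i2 (x.2 j2)); split.
  by rewrite /trans /= mulr_gt0 //; apply: lt_pos => //; apply: good0.
move: hx s1 s2; rewrite /inW /pot /=.
case: (monomorphic x.1); case: (monomorphic x.2) => //= _.
- by move=> -> s2; rewrite ltn_add2l.
- by move=> s1 ->; rewrite ltn_add2r.
- by move=> s1 s2; lia.
Qed.

Lemma T0_ge0 x y : 0 <= T0 x y.
Proof. exact: (T_ge0 hw1 hw2 (good0 w1 b c r)). Qed.

Lemma T0_sum1 x : \sum_y T0 x y = 1.
Proof. exact: (T_sum1 hN hw1 hw2 (good0 w1 b c r)). Qed.

Lemma eq_max (h : state N -> R) x y M :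
  (forall z, h z <= M) -> h x = M -> h x = \sum_z T0 x z * h z -> 0 < T0 x y -> h y = M.
Proof.
move=> Hle hxM Hh Ty.
have H0 : \sum_z T0 x z * (M - h z) = 0.
  under eq_bigr do rewrite mulrBr.
  by rewrite sumrB -big_distrl /= T0_sum1 mul1r -Hh hxM subrr.
have /psumr_eq0P H := H0.
have Hge : forall z, true -> 0 <= T0 x z * (M - h z).
  by move=> z _; rewrite mulr_ge0 ?T0_ge0 // subr_ge0.
have := H Hge y isT.
move/eqP; rewrite mulf_eq0 gt_eqF //= subr_eq0 => /eqP <-.
by [].
Qed.

Lemma maxprin_le (h : state N -> R) :
  (forall x, inW x -> h x = \sum_y T0 x y * h y) ->
  (forall x, ~~ inW x -> h x = 0) -> forall x, h x <= 0.
Proof.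
move=> Harm Hoff.
have [xm Hm] := fin_max ([ffun _ => true], [ffun _ => true]) h.
suff : h xm <= 0 by move=> H x; apply: le_trans (Hm x) H.
rewrite leNgt; apply/negP => Mpos.
suff key : forall n x, (pot x <= n)%N -> h x = h xm -> False.
  exact: (key _ xm (leqnn _) erefl).
elim=> [|n IH] x px hx;
  (have inx : inW x by case: (boolP (inW x)) => // /Hoff; rewrite hx => H; move: Mpos; rewrite H ltxx);
  have [y [Ty py]] := step_exists inx;
  have hy : h y = h xm by apply: (eq_max Hm hx (Harm x inx) Ty).
  by move: py px; lia.
by apply: (IH y) => //; move: py px; lia.
Qed.

Lemma maxprin (h : state N -> R) :
  (forall x, inW x -> h x = \sum_y T0 x y * h y) ->
  (forall x, ~~ inW x -> h x = 0) -> forall x, h x = 0.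
Proof.
move=> Harm Hoff x; apply/eqP; rewrite eq_le maxprin_le //=.
rewrite -oppr_le0; apply: (@maxprin_le (fun x => - h x)) => [y hy|y hy].
  by rewrite Harm //; rewrite -sumrN; apply: eq_bigr => z _; rewrite mulrN.
by rewrite Hoff ?oppr0.
Qed.

End MaxPrin.
Section Mat.
Variable R : realType.
Variable N : nat.
Hypothesis hN : (0 < N)%N.
Variables w1 w2 : 'M[R]_N.
Hypothesis hw1 : weighted_graph w1.
Hypothesis hw2 : weighted_graph w2.
Variables b c r : R.

Local Notation n := #|{: state N}|.
Definition ev : 'I_n -> state N := @enum_val _ {: state N}.
Lemma sum_ev (F : state N -> R) : \sum_(a < n) F (ev a) = \sum_x F x.
Proof. by rewrite (big_enum_val (A := {: state N})). Qed.
Lemma ev_rank x : ev (enum_rank x) = x.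
Proof. by rewrite /ev enum_rankK. Qed.
Lemma rank_ev a : enum_rank (ev a) = a.
Proof. by rewrite /ev enum_valK. Qed.

Definition Afun d (x y : state N) : R :=
  (x == y)%:R - (inW x)%:R * trans w1 w2 b c r d x y.
Definition Amx d : 'M[R]_n := \matrix_(a1, a2) Afun d (ev a1) (ev a2).

Lemma Amx_mul d (h : state N -> R) x :
  (Amx d *m \col_a h (ev a)) (enum_rank x) 0 =
  h x - (inW x)%:R * \sum_y trans w1 w2 b c r d x y * h y.
Proof.
rewrite !mxE.
under eq_bigr do rewrite !mxE.
rewrite (sum_ev (fun y => Afun d (ev (enum_rank x)) y * h y)) ev_rank /Afun.
under eq_bigr do rewrite mulrBl.
rewrite sumrB (bigD1 x) //= eqxx mul1r big1 ?addr0; last by move=> y; rewrite eq_sym => /negbTE ->; rewrite mul0r.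
by rewrite big_distrr /=; congr (_ - _); apply: eq_bigr => y _; rewrite mulrA.
Qed.

Lemma detA0 : \det (Amx 0) != 0.
Proof.
apply/negP => /eqP H.
have : \det (Amx 0)^T == 0 by rewrite det_tr H.
case/det0P => v vn0 Hv.
pose h x := v 0 (enum_rank x).
have Hh : forall x, h x - (inW x)%:R * \sum_y trans w1 w2 b c r 0 x y * h y = 0.
  move=> x; move/matrixP: Hv => /(_ 0 (enum_rank x)).
  rewrite !mxE => E; rewrite -[RHS]E -Amx_mul !mxE.
  apply: eq_bigr => a _; rewrite !mxE mulrC; congr (_ * _).
  by rewrite /h rank_ev.
have h0 := maxprin hN hw1 hw2 (h := h) (b := b) (c := c) (r := r).
have {}h0 : forall x, h x = 0.
  apply: h0 => [x hx | x hx]; have := Hh x.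
    by rewrite hx mul1r => /eqP; rewrite subr_eq0 => /eqP.
  by rewrite (negbTE hx) mul0r subr0.
move/negP: vn0; apply; apply/eqP/matrixP => i a; rewrite ord1 mxE.
by have := h0 (ev a); rewrite /h rank_ev.
Qed.

Definition gfun (x : state N) : R := avg w1 x.1.
Definition Dd d (x : state N) : R :=
  (inW x)%:R * (\sum_y trans w1 w2 b c r d x y * gfun y - gfun x).
Definition efun d (x : state N) : R := rho1 w1 w2 b c r d x - gfun x.

Lemma e_eq d : good w1 b c r d -> forall x,
  efun d x - (inW x)%:R * \sum_y trans w1 w2 b c r d x y * efun d y = Dd d x.
Proof.
move=> gd x; rewrite /Dd /efun.
case: (boolP (inW x)) => hx; last first.
  move: hx; rewrite /inW negbK => /andP [m1 m2].
  by rewrite (rho_offW hN hw1 hw2 gd m1 m2) /gfun subrr !mul0r subr0.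
rewrite !mul1r.
under eq_bigr do rewrite mulrBr.
rewrite sumrB -(rho_harm hN hw1 hw2 gd); ring.
Qed.

Lemma det_e d : good w1 b c r d -> forall x,
  \det (Amx d) * efun d x = (\adj (Amx d) *m \col_a Dd d (ev a)) (enum_rank x) 0.
Proof.
move=> gd x.
have E : Amx d *m \col_a efun d (ev a) = \col_a Dd d (ev a).
  apply/matrixP => a i; rewrite ord1.
  by rewrite -{1}(rank_ev a) Amx_mul e_eq // mxE.
rewrite -E mulmxA mul_adj_mx mul_scalar_mx !mxE.
by rewrite ev_rank.
Qed.

End Mat.
Lemma idc (R : realType) : (fun d : R => d) @ 0^'+ --> (0:R).
Proof. apply: cvg_at_right_filter. exact: cvg_id. Qed.

Lemma lin_cvg (R : realType) (a k : R) : (fun d : R => a + d * k) @ 0^'+ --> a.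
Proof.
have H := cvgD (cvg_cst a) (cvgM (@idc R) (cvg_cst k)).
rewrite mul0r addr0 in H; exact: H.
Qed.

Lemma avg_replace (R : realType) N (w : 'M[R]_N) z i v :
  avg w (replace z i v) = avg w z + statdist w i * (b2r R v - b2r R (z i)).
Proof.
rewrite /avg.
under eq_bigr do rewrite replaceE mulrDr.
rewrite big_split /=; congr (_ + _).
under eq_bigr do rewrite mulrCA.
by rewrite (sum_delta' (fun k => statdist w k * (b2r R v - b2r R (z k)))).
Qed.

Section Deriv.
Variable R : realType.
Variable N : nat.
Hypothesis hN : (0 < N)%N.
Variables w1 w2 : 'M[R]_N.
Hypothesis hw1 : weighted_graph w1.
Hypothesis hw2 : weighted_graph w2.
Variables b c r : R.

Local Notation F d x := (fecundity w1 b c r d x).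
Local Notation T d := (trans w1 w2 b c r d).
Local Notation pi := (statdist w1).
Local Notation P := (transP w1).
Local Notation y_ x j := (b2r R (x.1 j)).

Lemma Tg d : good w1 b c r d -> forall x,
  \sum_y T d x y * gfun w1 y =
  gfun w1 x + N%:R^-1 * \sum_i pi i * \sum_j ew w1 (F d x) i j * (y_ x j - y_ x i).
Proof.
move=> gd x.
have -> : \sum_y T d x y * gfun w1 y =
   \sum_y T d x y * ((fun z => avg w1 z) y.1 * (fun _ => 1) y.2).
  by apply: eq_bigr => y _; rewrite mulr1.
rewrite (T_prod w1 w2 b c r d x (fun z => avg w1 z) (fun _ => 1)).
under [X in _ * X]eq_bigr do rewrite mulr1.
rewrite (lt_sum1 hN hw2 (gd x)) mulr1 lt_sum.
under eq_bigr do under eq_bigr do rewrite avg_replace mulrDr.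
under eq_bigr do rewrite big_split /= -big_distrl /= (ew_sum1 hw1 (gd x)) mul1r mulrDr.
rewrite big_split /= -big_distrl /= sum_invN // mul1r big_distrr /=; congr (_ + _).
apply: eq_bigr => i _; congr (_ * _); rewrite big_distrr /=.
by apply: eq_bigr => j _; rewrite mulrCA.
Qed.

Lemma stat0 (x : state N) : \sum_i pi i * \sum_j P i j * (y_ x j - y_ x i) = 0.
Proof.
under eq_bigr do (under eq_bigr do rewrite mulrBr; rewrite sumrB -big_distrl /= transP_sum1 // mul1r mulrBr).
rewrite sumrB.
under eq_bigr do rewrite big_distrr /=.
rewrite exchange_big /=.
under eq_bigr do (under eq_bigr do rewrite mulrA; rewrite -big_distrl /= statdist_stat //).
by rewrite subrr.
Qed.

Lemma ew0 x i j : ew w1 (F 0 x) i j = P i j.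
Proof.
rewrite /ew /fecundity mul0r addr0 mulr1 /transP mxE; congr (_ / _).
by rewrite /strength; apply: eq_bigr => k _; rewrite mul0r addr0 mulr1.
Qed.

Lemma Dd_formula d : good w1 b c r d -> forall x,
  Dd w1 w2 b c r d x =
  (inW x)%:R * (N%:R^-1 * \sum_i pi i * \sum_j ew w1 (F d x) i j * (y_ x j - y_ x i)).
Proof. by move=> gd x; rewrite /Dd Tg // addrC addKr. Qed.

Lemma Dd0 x : Dd w1 w2 b c r 0 x = 0.
Proof.
rewrite Dd_formula; last exact: good0.
under eq_bigr do under eq_bigr do rewrite ew0.
by rewrite stat0 mulr0 mulr0.
Qed.

Local Notation uu x j := (payoff w1 b c r x j).
Definition Kf x i := \sum_k w1 i k * payoff w1 b c r x k.
Definition coefDx x i j :=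
  w1 i j * (payoff w1 b c r x j * strength w1 i - Kf x i) / (strength w1 i * strength w1 i).
Definition Dprime x := (inW x)%:R *
  (N%:R^-1 * \sum_i pi i * \sum_j coefDx x i j * (y_ x j - y_ x i)).

Lemma den_eq d x i : \sum_k w1 i k * F d x k = strength w1 i + d * Kf x i.
Proof.
rewrite /fecundity /Kf /strength big_distrr -big_split /=.
by apply: eq_bigr => k _; rewrite mulrDr mulr1 mulrCA.
Qed.

Lemma ew_diff d x i j : d != 0 -> strength w1 i + d * Kf x i != 0 ->
  d^-1 * (ew w1 (F d x) i j - P i j) =
  w1 i j * (uu x j * strength w1 i - Kf x i) / (strength w1 i * (strength w1 i + d * Kf x i)).
Proof.
move=> d0 h; rewrite /ew den_eq /transP mxE /fecundity.
have s0 : strength w1 i != 0 by rewrite gt_eqF // strength_gt0.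
by field; rewrite d0 s0 h.
Qed.

Lemma good_near : \forall d \near 0^'+, good w1 b c r d.
Proof.
apply: filter_forall => x; apply: filter_forall => j.
exact: (cvgr_gt 1 (@lin_cvg R 1 (payoff w1 b c r x j)) 0 ltr01).
Qed.

Lemma D_cvg x : (fun d => d^-1 * Dd w1 w2 b c r d x) @ 0^'+ --> Dprime x.
Proof.
pose g d := (inW x)%:R * (N%:R^-1 * \sum_i pi i * \sum_j
   (w1 i j * (uu x j * strength w1 i - Kf x i) / (strength w1 i * (strength w1 i + d * Kf x i)))
   * (y_ x j - y_ x i)).
have Heq : \forall d \near 0^'+, g d = d^-1 * Dd w1 w2 b c r d x.
  near=> d.
  have gd : good w1 b c r d by near: d; exact: good_near.
  have d0 : 0 < d by near: d; exact: nbhs_right_gt.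
  rewrite Dd_formula //.
  have E1 : \sum_i pi i * \sum_j ew w1 (F d x) i j * (y_ x j - y_ x i) =
            \sum_i pi i * \sum_j (ew w1 (F d x) i j - P i j) * (y_ x j - y_ x i).
    rewrite -[LHS]subr0 -[X in _ - X](stat0 x) -sumrB; apply: eq_bigr => i _.
    rewrite -mulrBr -sumrB; congr (_ * _); apply: eq_bigr => j _.
    by rewrite mulrBl.
  rewrite E1 /g [RHS]mulrCA; congr (_ * _); rewrite [RHS]mulrCA; congr (_ * _).
  rewrite big_distrr /=; apply: eq_bigr => i _.
  rewrite [RHS]mulrCA [in RHS]big_distrr /=; congr (_ * _); apply: eq_bigr => j _.
  rewrite mulrA ew_diff ?gt_eqF //.
  by rewrite -den_eq (den_gt0 hw1 (gd x)).
apply: cvg_trans (near_eq_cvg Heq) _.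
rewrite /g /Dprime.
apply: cvgM; first exact: cvg_cst.
apply: cvgM; first exact: cvg_cst.
apply: cvg_sum_fun => i _.
apply: cvgM; first exact: cvg_cst.
apply: cvg_sum_fun => j _.
apply: cvgM; last exact: cvg_cst.
rewrite /coefDx.
apply: cvgM; first exact: cvg_cst.
have s0 : strength w1 i != 0 by rewrite gt_eqF // strength_gt0.
apply: cvgV; first by rewrite mulf_neq0.
apply: cvgM; first exact: cvg_cst.
exact: lin_cvg.
Unshelve. all: by end_near.
Qed.

End Deriv.
Section Cont.
Variable R : realType.

Lemma det_cvg (T : Type) (F : set_system T) (FF : Filter F) m (M : T -> 'M[R]_m) (M0 : 'M[R]_m) :
  (forall i j, (fun d => M d i j) @ F --> M0 i j) ->
  (fun d => \det (M d)) @ F --> \det M0.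
Proof.
move=> H; rewrite /determinant.
apply: cvg_sum_fun => s _; apply: cvgM; first exact: cvg_cst.
by apply: cvg_prod_fun => i _; apply: H.
Qed.

Lemma adj_cvg (T : Type) (F : set_system T) (FF : Filter F) m (M : T -> 'M[R]_m) (M0 : 'M[R]_m) :
  (forall i j, (fun d => M d i j) @ F --> M0 i j) ->
  forall i j, (fun d => \adj (M d) i j) @ F --> \adj M0 i j.
Proof.
move=> H i j.
under eq_fun do rewrite mxE /cofactor.
rewrite mxE /cofactor.
apply: cvgM; first exact: cvg_cst.
apply: det_cvg => k l.
under eq_fun do rewrite !mxE.
rewrite !mxE; exact: H.
Qed.
End Cont.
Section Lim.
Variable R : realType.
Variable N : nat.
Hypothesis hN : (0 < N)%N.
Variables w1 w2 : 'M[R]_N.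
Hypothesis hw1 : weighted_graph w1.
Hypothesis hw2 : weighted_graph w2.
Variables b c r : R.

Local Notation F d x := (fecundity w1 b c r d x).
Local Notation T d := (trans w1 w2 b c r d).

Lemma F_cvg x j : (fun d => F d x j) @ 0^'+ --> F 0 x j.
Proof. by rewrite /fecundity mul0r addr0; exact: lin_cvg. Qed.

Lemma lt_cvg (w : 'M[R]_N) (hw : weighted_graph w) x z z' :
  (fun d => layer_trans w (F d x) z z') @ 0^'+ --> layer_trans w (F 0 x) z z'.
Proof.
apply: cvg_sum_fun => i _; apply: cvgM; first exact: cvg_cst.
apply: cvg_sum_fun => j _; case: eqP => _; last exact: cvg_cst.
apply: cvgM; first by apply: cvgM; [exact: cvg_cst | exact: F_cvg].
apply: cvgV; first by rewrite gt_eqF // (den_gt0 hw (good0 w1 b c r x)).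
apply: cvg_sum_fun => k _; apply: cvgM; [exact: cvg_cst | exact: F_cvg].
Qed.

Lemma T_cvg x y : (fun d => T d x y) @ 0^'+ --> T 0 x y.
Proof. by apply: cvgM; apply: lt_cvg. Qed.

Lemma A_cvg a1 a2 : (fun d => Amx w1 w2 b c r d a1 a2) @ 0^'+ --> Amx w1 w2 b c r 0 a1 a2.
Proof.
rewrite mxE /Afun; under eq_fun do rewrite mxE /Afun.
apply: cvgD; first exact: cvg_cst.
apply: cvgN; apply: cvgM; [exact: cvg_cst | exact: T_cvg].
Qed.

Lemma efun0 x : efun w1 w2 b c r 0 x = 0.
Proof.
have := det_e hN hw1 hw2 (good0 w1 b c r) x.
have -> : \col_a Dd w1 w2 b c r 0 (ev a) = 0.
  by apply/matrixP => a i; rewrite !mxE Dd0.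
rewrite mulmx0 mxE => /eqP; rewrite mulf_eq0 (negbTE (detA0 hN hw1 hw2 b c r)) /=.
by move/eqP.
Qed.

Definition Lval xi := (\sum_k \adj (Amx w1 w2 b c r 0) (enum_rank xi) k * Dprime w1 b c r (ev k))
                      / \det (Amx w1 w2 b c r 0).

Lemma main_limit xi :
  (fun d => d^-1 * (rho1 w1 w2 b c r d xi - rho1 w1 w2 b c r 0 xi)) @ 0^'+ --> Lval xi.
Proof.
pose g d := (\sum_k \adj (Amx w1 w2 b c r d) (enum_rank xi) k *
              (d^-1 * Dd w1 w2 b c r d (ev k))) / \det (Amx w1 w2 b c r d).
have detc : (fun d => \det (Amx w1 w2 b c r d)) @ 0^'+ --> \det (Amx w1 w2 b c r 0).
  by apply: det_cvg => a1 a2; apply: A_cvg.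
have Heq : \forall d \near 0^'+, g d = d^-1 * (rho1 w1 w2 b c r d xi - rho1 w1 w2 b c r 0 xi).
  have dn := cvgr_neq0 _ detc (detA0 hN hw1 hw2 b c r).
  near=> d.
  have gd : good w1 b c r d by near: d; exact: good_near.
  have dd : \det (Amx w1 w2 b c r d) != 0 by near: d; exact: dn.
  have := det_e hN hw1 hw2 gd xi; rewrite mxE => E.
  have -> : rho1 w1 w2 b c r d xi - rho1 w1 w2 b c r 0 xi = efun w1 w2 b c r d xi.
    by have := efun0 xi; rewrite /efun => /eqP; rewrite subr_eq0 => /eqP ->.
  rewrite /g.
  under eq_bigr do rewrite mulrCA.
  rewrite -big_distrr /=.
  have -> : \sum_k \adj (Amx w1 w2 b c r d) (enum_rank xi) k * Dd w1 w2 b c r d (ev k) =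
     \det (Amx w1 w2 b c r d) * efun w1 w2 b c r d xi.
    by rewrite E; apply: eq_bigr => k _; rewrite [(\col_a _) k 0]mxE.
  by rewrite -mulrA [(_ * _) / _]mulrAC divff // mul1r.
apply: cvg_trans (near_eq_cvg Heq) _.
rewrite /g /Lval.
apply: cvgM; last by apply: cvgV; [exact: detA0 | exact: detc].
apply: cvg_sum_fun => k _; apply: cvgM.
  by apply: adj_cvg => a1 a2; apply: A_cvg.
exact: D_cvg.
Unshelve. all: by end_near.
Qed.

End Lim.
Lemma avg_max (R : realType) (I : finType) (cc f : I -> R) M :
  (forall k, 0 <= cc k) -> \sum_k cc k = 1 -> (forall k, f k <= M) ->
  \sum_k cc k * f k = M -> forall k, 0 < cc k -> f k = M.
Proof.
move=> c0 c1 fle E k ck.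
have H0 : \sum_k cc k * (M - f k) = 0.
  under eq_bigr do rewrite mulrBr.
  by rewrite sumrB -big_distrl /= c1 mul1r E subrr.
have /psumr_eq0P H := H0.
have Hge : forall z, true -> 0 <= cc z * (M - f z).
  by move=> z _; rewrite mulr_ge0 // subr_ge0.
have := H Hge k isT.
by move/eqP; rewrite mulf_eq0 gt_eqF //= subr_eq0 => /eqP <-.
Qed.

Section Uniq.
Variable R : realType.
Variable N : nat.
Hypothesis hN : (0 < N)%N.
Variable w : 'M[R]_N.
Hypothesis hw : weighted_graph w.
Local Notation P := (transP w).
Local Notation pi := (statdist w).

Lemma closed_all (p : pred 'I_N) i0 :
  (forall i k, p i -> 0 < w i k -> p k) -> p i0 -> forall j, p j.
Proof.
move=> cl pi0 j.
have /connectP [s ps ->] := conn hw i0 j.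
elim: s i0 pi0 ps => [|x s IH] i0 pi0 //= /andP [e ps].
exact: IH (cl _ _ pi0 e) ps.
Qed.

Lemma P_gt0 i k : 0 < w i k -> 0 < P i k.
Proof. by move=> h; rewrite /transP mxE divr_gt0 // strength_gt0. Qed.

Lemma harm_const (f : 'I_N -> R) :
  (forall i, f i = \sum_k P i k * f k) -> forall i j, f i = f j.
Proof.
move=> Hf.
have [im Hm] := fin_max (Ordinal hN) f.
have all : forall j, f j == f im.
  apply: (closed_all (p := fun j => f j == f im) (i0 := im)) => // i k /eqP fi hik.
  apply/eqP; apply: (avg_max (cc := P i)) => //.
  - by move=> l; apply: transP_ge0.
  - by apply: transP_sum1.
  - by rewrite -Hf.
  - exact: P_gt0.
by move=> i j; rewrite (eqP (all i)) (eqP (all j)).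
Qed.

End Uniq.
Section Uniq2.
Variable R : realType.
Variable N : nat.
Hypothesis hN : (0 < N)%N.
Variable w : 'M[R]_N.
Hypothesis hw : weighted_graph w.
Local Notation P := (transP w).
Local Notation pi := (statdist w).

Lemma avg_le (f : 'I_N -> R) M i : (forall k, f k <= M) -> \sum_k P i k * f k <= M.
Proof.
move=> H; rewrite -[X in _ <= X]mul1r -(transP_sum1 hw i) big_distrl /=.
by apply: ler_sum => k _; apply: ler_wpM2l; [apply: transP_ge0 | apply: H].
Qed.

Lemma beta_off_le (H : 'M[R]_N) :
  (forall i, H i i = 0) ->
  (forall i j, i != j -> H i j = 2^-1 * \sum_k P i k * H k j + 2^-1 * \sum_k P j k * H i k) ->
  forall i j, H i j <= 0.
Proof.
move=> Hd Ho.
have [[im jm] Hm] := fin_max (Ordinal hN, Ordinal hN) (fun p : 'I_N * 'I_N => H p.1 p.2).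
suff : H im jm <= 0 by move=> HM i j; apply: le_trans (Hm (i, j)) HM.
rewrite leNgt; apply/negP => Mpos.
set M := H im jm in Mpos Hm.
have Hm' : forall i j, H i j <= M by move=> i j; exact: (Hm (i, j)).
have p_ne : forall k, H k jm = M -> k != jm.
  by move=> k hk; apply/eqP => e; move: Mpos; rewrite -hk e Hd ltxx.
have key : forall k, H k jm = M -> forall l, 0 < w k l -> H l jm = M.
  move=> k hk l hkl.
  have A1 : \sum_q P k q * H q jm <= M by apply: avg_le => q; exact: Hm'.
  have B1 : \sum_q P jm q * H k q <= M by apply: avg_le => q; exact: Hm'.
  have E := Ho k jm (p_ne k hk); rewrite hk in E.
  have A2 : \sum_q P k q * H q jm = M by lra.
  have := (@avg_max R _ (P k) (fun q => H q jm) M (transP_ge0 hw k) (transP_sum1 hw k)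
            (fun q => Hm' q jm) A2 l).
  apply; exact: P_gt0.
have all := closed_all hw (p := fun k => H k jm == M) (i0 := im).
have := all (fun k l hk hl => introT eqP (key k (eqP hk) l hl)) (eqxx _) jm.
by move/eqP; rewrite Hd => E; move: Mpos; rewrite -/M -E ltxx.
Qed.

Lemma beta_hom (H : 'M[R]_N) :
  (forall i, H i i = \sum_k P i k * H k k) ->
  (forall i j, i != j -> H i j = 2^-1 * \sum_k P i k * H k j + 2^-1 * \sum_k P j k * H i k) ->
  \sum_i pi i * H i i = 0 -> H = 0.
Proof.
move=> Hd Ho Hn.
have Hc := harm_const hN hw (f := fun i => H i i) Hd.
have Hd0 : forall i, H i i = 0.
  move=> i; move: Hn; under eq_bigr do rewrite (Hc _ i).
  by rewrite -big_distrl /= statdist_sum1 // mul1r.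
apply/matrixP => i j; rewrite mxE; apply/eqP; rewrite eq_le.
rewrite beta_off_le //= -oppr_le0.
have := beta_off_le (H := - H) _ _ i j; rewrite mxE; apply.
  by move=> k; rewrite mxE Hd0 oppr0.
move=> k l kl; rewrite !mxE Ho // opprD.
have e1 : \sum_q P k q * (- H) q l = - \sum_q P k q * H q l.
  by rewrite -sumrN; apply: eq_bigr => q _; rewrite [(- H) _ _]mxE mulrN.
have e2 : \sum_q P l q * (- H) k q = - \sum_q P l q * H k q.
  by rewrite -sumrN; apply: eq_bigr => q _; rewrite [(- H) _ _]mxE mulrN.
rewrite e1 e2; lra.
Qed.

End Uniq2.
Section Uniq3.
Variable R : realType.
Variable N : nat.
Hypothesis hN2 : (1 < N)%N.
Variables w1 w2 : 'M[R]_N.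
Hypothesis hw1 : weighted_graph w1.
Hypothesis hw2 : weighted_graph w2.
Local Notation P1 := (transP w1).
Local Notation P2 := (transP w2).
Local Notation pi := (statdist w1).
Let hN : (0 < N)%N. Proof. by apply: ltn_trans hN2. Qed.

Lemma gamma_hom (G : 'M[R]_N) :
  (forall i j, G i j =
      (2 * N%:R - 1)^-1 * \sum_(k1 < N) \sum_(k2 < N) P1 i k1 * P2 j k2 * G k1 k2
    + (N%:R - 1) / (2 * N%:R - 1) * (\sum_(k < N) P1 i k * G k j + \sum_(k < N) P2 j k * G i k)) ->
  \sum_i pi i * G i i = 0 -> G = 0.
Proof.
move=> HG Hn.
have n2 : (2 : R) <= N%:R by rewrite (ler_nat R 2 N).
have [[im jm] Hm] := fin_max (Ordinal hN, Ordinal hN) (fun p : 'I_N * 'I_N => G p.1 p.2).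
set M := G im jm in Hm.
have Hm' : forall i j, G i j <= M by move=> i j; exact: (Hm (i, j)).
have maxpt : forall k l, G k l = M ->
    \sum_q P1 k q * G q l = M /\ \sum_q P2 l q * G k q = M.
  move=> k l hkl.
  have A1 : \sum_q P1 k q * G q l <= M by apply: avg_le => // q; exact: Hm'.
  have B1 : \sum_q P2 l q * G k q <= M by apply: avg_le => // q; exact: Hm'.
  have X1 : \sum_(k1 < N) \sum_(k2 < N) P1 k k1 * P2 l k2 * G k1 k2 <= M.
    under eq_bigr do under eq_bigr do rewrite -mulrA.
    under eq_bigr do rewrite -big_distrr /=.
    apply: avg_le => // q; apply: avg_le => // q'; exact: Hm'.
  have E := HG k l; rewrite hkl in E.
  set X := \sum_(k1 < N) _ in E X1.
  set A := \sum_q P1 k q * G q l in E A1 *.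
  set B := \sum_q P2 l q * G k q in E B1 *.
  have E' : (2 * N%:R - 1) * M = X + (N%:R - 1) * (A + B).
    rewrite [in LHS]E; field.
    by rewrite gt_eqF //; lra.
  by split; nra.
have allk : forall k, G k jm = M.
  move=> k; apply/eqP.
  apply: (closed_all hw1 (p := fun k => G k jm == M) (i0 := im)) => // i q /eqP hi hiq.
  apply/eqP; have [A _] := maxpt i jm hi.
  have := (@avg_max R _ (P1 i) (fun q => G q jm) M (transP_ge0 hw1 i) (transP_sum1 hw1 i)
            (fun q => Hm' q jm) A q).
  apply; exact: P_gt0.
have all : forall k l, G k l = M.
  move=> k l; apply/eqP.
  apply: (closed_all hw2 (p := fun l => G k l == M) (i0 := jm)) => //; last by rewrite allk.
  move=> i q /eqP hi hiq.
  apply/eqP; have [_ B] := maxpt k i hi.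
  have := (@avg_max R _ (P2 i) (fun q => G k q) M (transP_ge0 hw2 i) (transP_sum1 hw2 i)
            (fun q => Hm' k q) B q).
  apply; exact: P_gt0.
have M0 : M = 0.
  move: Hn; under eq_bigr do rewrite all.
  by rewrite -big_distrl /= statdist_sum1 // mul1r.
by apply/matrixP => i j; rewrite all M0 mxE.
Qed.

End Uniq3.
Section LayerS.
Variable R : realType.
Variable N : nat.
Hypothesis hN : (0 < N)%N.
Variable w : 'M[R]_N.
Hypothesis hw : weighted_graph w.
Local Notation P := (transP w).
Local Notation pi := (statdist w).

Definition Sw (f : {ffun 'I_N -> bool} -> R) z :=
  \sum_i N%:R^-1 * \sum_j P i j * f (replace z i (z j)).

Lemma ew1 (F : 'I_N -> R) : (forall j, F j = 1) -> forall i j, ew w F i j = P i j.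
Proof.
move=> F1 i j; rewrite /ew F1 mulr1 /transP mxE; congr (_ / _).
by rewrite /strength; apply: eq_bigr => k _; rewrite F1 mulr1.
Qed.

Lemma lt_sum_1 (F : 'I_N -> R) : (forall j, F j = 1) -> forall z0 f,
  \sum_z layer_trans w F z0 z * f z = Sw f z0.
Proof.
move=> F1 z0 f; rewrite lt_sum /Sw; apply: eq_bigr => i _; congr (_ * _).
by apply: eq_bigr => j _; rewrite ew1.
Qed.

Lemma S_lin2 (cst : R) a b (G1 G2 : 'I_N -> R) :
  \sum_i N%:R^-1 * \sum_j P i j * (cst + (a == i)%:R * G1 j + (b == i)%:R * G2 j) =
  cst + N%:R^-1 * (\sum_j P a j * G1 j + \sum_j P b j * G2 j).
Proof.
have E : forall i, \sum_j P i j * (cst + (a == i)%:R * G1 j + (b == i)%:R * G2 j) =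
   cst + (a == i)%:R * \sum_j P i j * G1 j + (b == i)%:R * \sum_j P i j * G2 j.
  move=> i; under eq_bigr do rewrite !mulrDr.
  rewrite !big_split /= -big_distrl /= transP_sum1 // mul1r !big_distrr /=.
  by congr (_ + _ + _); apply: eq_bigr => j _; rewrite mulrCA.
under eq_bigr do rewrite E !mulrDr.
rewrite !big_split /= -big_distrl /= sum_invN // mul1r; rewrite -addrA; congr (_ + _).
rewrite mulrDr; congr (_ + _).
  under eq_bigr do rewrite mulrCA.
  exact: (sum_delta (fun i => N%:R^-1 * \sum_j P i j * G1 j) a).
under eq_bigr do rewrite mulrCA.
exact: (sum_delta (fun i => N%:R^-1 * \sum_j P i j * G2 j) b).
Qed.

Local Notation Y z a := (b2r R (z a)).

Lemma S_Y a z : Sw (fun z => Y z a) z = Y z a + N%:R^-1 * (\sum_j P a j * Y z j - Y z a).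
Proof.
rewrite /Sw.
have E := S_lin2 (Y z a) a a (fun j => Y z j - Y z a) (fun _ => 0).
have Z : \sum_j P a j * (fun _ : 'I_N => (0:R)) j = 0 by rewrite big1 // => j _; rewrite mulr0.
rewrite Z addr0 in E.
rewrite (_ : \sum_j P a j * (Y z j - Y z a) = \sum_j P a j * Y z j - Y z a) in E; last first.
  under eq_bigr do rewrite mulrBr.
  by rewrite sumrB -big_distrl /= transP_sum1 // mul1r.
rewrite -E; apply: eq_bigr => i _; congr (_ * _); apply: eq_bigr => j _.
by rewrite replaceE mulr0 addr0.
Qed.

Lemma S_YY a b z : a != b ->
  Sw (fun z => Y z a * Y z b) z = Y z a * Y z b +
    N%:R^-1 * (\sum_j P a j * ((Y z j - Y z a) * Y z b) + \sum_j P b j * (Y z a * (Y z j - Y z b))).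
Proof.
move=> ab; rewrite /Sw -S_lin2; apply: eq_bigr => i _; congr (_ * _).
apply: eq_bigr => j _; congr (_ * _); rewrite !replaceE.
case: (eqVneq a i) => [ai|ai]; case: (eqVneq b i) => [bi|bi] //=.
- by move: ab; rewrite ai bi eqxx.
- by rewrite !mul1r !mul0r !addr0 mulrDl.
- by rewrite !mul1r !mul0r !addr0 mulrDr.
- by rewrite !mul0r !addr0.
Qed.

Lemma stat0w (z : {ffun 'I_N -> bool}) :
  \sum_i pi i * \sum_j P i j * (Y z j - Y z i) = 0.
Proof.
under eq_bigr do (under eq_bigr do rewrite mulrBr; rewrite sumrB -big_distrl /= transP_sum1 // mul1r mulrBr).
rewrite sumrB.
under eq_bigr do rewrite big_distrr /=.
rewrite exchange_big /=.
under eq_bigr do (under eq_bigr do rewrite mulrA; rewrite -big_distrl /= statdist_stat //).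
by rewrite subrr.
Qed.

Lemma S_avg z : Sw (fun z => avg w z) z = avg w z.
Proof.
rewrite /Sw.
under eq_bigr do under eq_bigr do rewrite avg_replace mulrDr.
under eq_bigr do rewrite big_split /= -big_distrl /= transP_sum1 // mul1r mulrDr.
rewrite big_split /= -big_distrl /= sum_invN // mul1r -[RHS]addr0; congr (_ + _).
rewrite -big_distrr /= -[RHS](mulr0 (N%:R^-1)); congr (_ * _).
rewrite -[RHS](stat0w z); apply: eq_bigr => i _; rewrite big_distrr /=.
by apply: eq_bigr => j _; rewrite mulrCA.
Qed.

Lemma S_1 z : Sw (fun _ => 1) z = 1.
Proof.
rewrite /Sw (eq_bigr (fun i => N%:R^-1)) ?sum_invN // => i _.
by rewrite (eq_bigr (P i)) ?transP_sum1 ?mulr1 // => j _; rewrite mulr1.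
Qed.

End LayerS.
Section VSec.
Variable R : realType.
Variable N : nat.
Hypothesis hN2 : (1 < N)%N.
Variables w1 w2 : 'M[R]_N.
Hypothesis hw1 : weighted_graph w1.
Hypothesis hw2 : weighted_graph w2.
Variables b c r : R.
Variable xi : state N.
Let hN : (0 < N)%N. Proof. by apply: ltn_trans hN2. Qed.

Local Notation T0 := (trans w1 w2 b c r 0).
Local Notation A0 := (Amx w1 w2 b c r 0).
Definition vv (y : state N) := \adj A0 (enum_rank xi) (enum_rank y) / \det A0.

Lemma F0_1 x j : fecundity w1 b c r 0 x j = 1.
Proof. by rewrite /fecundity mul0r addr0. Qed.

Lemma T0_prod x (f1 f2 : {ffun 'I_N -> bool} -> R) :
  \sum_y T0 x y * (f1 y.1 * f2 y.2) = Sw w1 f1 x.1 * Sw w2 f2 x.2.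
Proof.
by rewrite T_prod (lt_sum_1 w1 (F0_1 x)) (lt_sum_1 w2 (F0_1 x)).
Qed.

Lemma v_col z : \sum_y vv y * Afun w1 w2 b c r 0 y z = (z == xi)%:R.
Proof.
have := mul_adj_mx A0; move/matrixP => /(_ (enum_rank xi) (enum_rank z)).
rewrite !mxE => E.
rewrite /vv.
under eq_bigr do rewrite mulrAC.
rewrite -big_distrl /=.
have -> : \sum_y \adj A0 (enum_rank xi) (enum_rank y) * Afun w1 w2 b c r 0 y z =
          \sum_k \adj A0 (enum_rank xi) k * A0 k (enum_rank z).
  rewrite -(sum_ev (fun y => \adj A0 (enum_rank xi) (enum_rank y) * Afun w1 w2 b c r 0 y z)).
  by apply: eq_bigr => k _; rewrite rank_ev [A0 _ _]mxE ev_rank.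
rewrite E (inj_eq enum_rank_inj) eq_sym.
case: eqP => _; rewrite ?mulr1n ?mulr0n ?mul0r //.
by rewrite divff // detA0.
Qed.

Lemma v_id (q : state N -> R) :
  \sum_y vv y * (q y - (inW y)%:R * \sum_z T0 y z * q z) = q xi.
Proof.
have E : forall y, q y - (inW y)%:R * \sum_z T0 y z * q z =
                   \sum_z Afun w1 w2 b c r 0 y z * q z.
  move=> y; rewrite /Afun.
  under [RHS]eq_bigr do rewrite mulrBl.
  rewrite sumrB; congr (_ - _).
    rewrite (bigD1 y) //= eqxx mul1r big1 ?addr0 //.
    by move=> z; rewrite eq_sym => /negbTE ->; rewrite mul0r.
  by rewrite big_distrr /=; apply: eq_bigr => z _; rewrite mulrA.
under eq_bigr do rewrite E big_distrr /=.
rewrite exchange_big /=.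
under eq_bigr do (under eq_bigr do rewrite mulrA; rewrite -big_distrl /= v_col).
rewrite (bigD1 xi) //= eqxx mul1r big1 ?addr0 //.
by move=> z /negbTE ->; rewrite mul0r.
Qed.

Lemma Lval_v : Lval w1 w2 b c r xi = \sum_y vv y * Dprime w1 b c r y.
Proof.
rewrite /Lval /vv big_distrl /=.
rewrite -(sum_ev (fun y => \adj A0 (enum_rank xi) (enum_rank y) / \det A0 * Dprime w1 b c r y)).
by apply: eq_bigr => k _; rewrite rank_ev mulrAC.
Qed.

Definition EE (phi : state N -> R) := \sum_y vv y * ((inW y)%:R * phi y).

Lemma EE_harm (q h : state N -> R) :
  (forall y, inW y -> \sum_z T0 y z * h z = h y) ->
  (forall y, ~~ inW y -> q y = h y) ->
  EE (fun y => q y - \sum_z T0 y z * q z) = q xi - h xi.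
Proof.
move=> Hh Hq.
have E : forall y, q y - (inW y)%:R * \sum_z T0 y z * q z =
  (inW y)%:R * (q y - \sum_z T0 y z * q z) + (h y - (inW y)%:R * \sum_z T0 y z * h z).
  move=> y; case: (boolP (inW y)) => hy.
    by rewrite Hh // !mul1r subrr addr0.
  by rewrite !mul0r !subr0 add0r Hq.
rewrite -(v_id q) -(v_id h).
under [in RHS]eq_bigr do rewrite E mulrDr.
by rewrite big_split /= addrK.
Qed.

Lemma EE_add f g : EE (fun y => f y + g y) = EE f + EE g.
Proof. by rewrite /EE -big_split; apply: eq_bigr => y _; rewrite !mulrDr. Qed.
Lemma EE_opp f : EE (fun y => - f y) = - EE f.
Proof. by rewrite /EE -sumrN; apply: eq_bigr => y _; rewrite !mulrN. Qed.
Lemma EE_sub f g : EE (fun y => f y - g y) = EE f - EE g.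
Proof. by rewrite EE_add EE_opp. Qed.
Lemma EE_scale k f : EE (fun y => k * f y) = k * EE f.
Proof. by rewrite /EE big_distrr; apply: eq_bigr => y _ /=; ring. Qed.
Lemma EE_sum (I : finType) (f : I -> state N -> R) :
  EE (fun y => \sum_i f i y) = \sum_i EE (f i).
Proof.
rewrite /EE exchange_big /=; apply: eq_bigr => y _.
by rewrite !big_distrr.
Qed.
Lemma EE_ext f g : (forall y, f y = g y) -> EE f = EE g.
Proof. by move=> H; rewrite /EE; apply: eq_bigr => y _; rewrite H. Qed.

Local Notation Y1 y a := (b2r R (y.1 a)).
Local Notation Y2 y a := (b2r R (y.2 a)).
Local Notation P1 := (transP w1).
Local Notation P2 := (transP w2).

Lemma T0_g1 y : \sum_z T0 y z * avg w1 z.1 = avg w1 y.1.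
Proof.
have -> : \sum_z T0 y z * avg w1 z.1 = \sum_z T0 y z * ((fun z => avg w1 z) z.1 * (fun _ => 1) z.2).
  by apply: eq_bigr => z _; rewrite mulr1.
by rewrite (T0_prod y (fun z => avg w1 z) (fun _ => 1)) S_avg // S_1 // mulr1.
Qed.

Lemma T0_g12 y : \sum_z T0 y z * (avg w1 z.1 * avg w2 z.2) = avg w1 y.1 * avg w2 y.2.
Proof.
rewrite (T0_prod y (fun z => avg w1 z) (fun z => avg w2 z)).
by rewrite !S_avg.
Qed.

Lemma mono_b2r (z : {ffun 'I_N -> bool}) a : monomorphic z ->
  b2r R (z a) = b2r R [forall i, z i].
Proof.
move=> m; case: (boolP [forall i, z i]) => H; first by rewrite (forallP H).
have [k /negP Hk] : exists k, ~~ z k by apply/existsP; rewrite -negb_forall.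
by rewrite (mono_val a k m); move: Hk; case: (z k).
Qed.

Lemma off_q11 y a b' : ~~ inW y -> Y1 y a * Y1 y b' = avg w1 y.1.
Proof.
rewrite /inW negbK => /andP [m1 m2].
by rewrite (avg_mono hN hw1 m1) !(mono_b2r _ m1) b2rK.
Qed.

Lemma off_q12 y a b' : ~~ inW y -> Y1 y a * Y2 y b' = avg w1 y.1 * avg w2 y.2.
Proof.
rewrite /inW negbK => /andP [m1 m2].
by rewrite (avg_mono hN hw1 m1) (avg_mono hN hw2 m2) (mono_b2r _ m1) (mono_b2r _ m2).
Qed.

Definition mm a b' := EE (fun y => Y1 y a * Y1 y b').
Definition mc a b' := EE (fun y => Y1 y a * Y2 y b').

Lemma rowsum_sub (w : 'M[R]_N) (hw : weighted_graph w) i (f : 'I_N -> R) k :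
  \sum_j transP w i j * (f j - k) = \sum_j transP w i j * f j - k.
Proof.
under eq_bigr do rewrite mulrBr.
by rewrite sumrB -big_distrl /= transP_sum1 // mul1r.
Qed.

Lemma T0_q1 y (f : {ffun 'I_N -> bool} -> R) :
  \sum_z T0 y z * f z.1 = Sw w1 f y.1.
Proof.
have -> : \sum_z T0 y z * f z.1 = \sum_z T0 y z * (f z.1 * (fun _ => 1) z.2).
  by apply: eq_bigr => z _; rewrite mulr1.
by rewrite (T0_prod y f (fun _ => 1)) S_1 // mulr1.
Qed.

Lemma m_diag a :
  N%:R^-1 * (mm a a - \sum_j P1 a j * mm j j) = Y1 xi a - avg w1 xi.1.
Proof.
have H := EE_harm (q := fun y => Y1 y a * Y1 y a) (h := fun y => avg w1 y.1)
            (fun y _ => T0_g1 y) (fun y hy => off_q11 a a hy).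
rewrite /= b2rK in H; rewrite -H.
have E : forall y : state N, Y1 y a * Y1 y a - \sum_z T0 y z * (Y1 z a * Y1 z a) =
   N%:R^-1 * (Y1 y a * Y1 y a - \sum_j P1 a j * (Y1 y j * Y1 y j)).
  move=> y; rewrite (T0_q1 y (fun z => b2r R (z a) * b2r R (z a))).
  rewrite (_ : (fun z : {ffun 'I_N -> bool} => b2r R (z a) * b2r R (z a)) = (fun z => b2r R (z a))); last first.
    by apply: funext => z; rewrite b2rK.
  rewrite S_Y // b2rK.
  under [in RHS]eq_bigr do rewrite b2rK.
  field; by rewrite pnatr_eq0 -lt0n.
rewrite (EE_ext E) EE_scale EE_sub EE_sum; congr (_ * (_ - _)).
by apply: eq_bigr => j _; rewrite EE_scale.
Qed.

Lemma m_off a b' : a != b' ->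
  N%:R^-1 * (2 * mm a b' - \sum_j P1 a j * mm j b' - \sum_j P1 b' j * mm a j) =
  Y1 xi a * Y1 xi b' - avg w1 xi.1.
Proof.
move=> ab.
have H := EE_harm (q := fun y => Y1 y a * Y1 y b') (h := fun y => avg w1 y.1)
            (fun y _ => T0_g1 y) (fun y hy => off_q11 a b' hy).
rewrite -H.
have E : forall y : state N, Y1 y a * Y1 y b' - \sum_z T0 y z * (Y1 z a * Y1 z b') =
   N%:R^-1 * (2 * (Y1 y a * Y1 y b') - \sum_j P1 a j * (Y1 y j * Y1 y b')
                - \sum_j P1 b' j * (Y1 y a * Y1 y j)).
  move=> y; rewrite (T0_q1 y (fun z => b2r R (z a) * b2r R (z b'))) S_YY //.
  have e1 : \sum_j P1 a j * ((Y1 y j - Y1 y a) * Y1 y b') =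
            \sum_j P1 a j * (Y1 y j * Y1 y b') - Y1 y a * Y1 y b'.
    rewrite -(rowsum_sub hw1); apply: eq_bigr => j _; congr (_ * _); ring.
  have e2 : \sum_j P1 b' j * (Y1 y a * (Y1 y j - Y1 y b')) =
            \sum_j P1 b' j * (Y1 y a * Y1 y j) - Y1 y a * Y1 y b'.
    rewrite -(rowsum_sub hw1); apply: eq_bigr => j _; congr (_ * _); ring.
  rewrite e1 e2; ring.
rewrite (EE_ext E) EE_scale !EE_sub EE_scale !EE_sum; congr (_ * (_ - _ - _)).
  by apply: eq_bigr => j _; rewrite EE_scale.
by apply: eq_bigr => j _; rewrite EE_scale.
Qed.

Lemma mc_eq a b' :
  (2 * N%:R - 1) * mc a b' - \sum_j \sum_k P1 a j * P2 b' k * mc j k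
  - (N%:R - 1) * (\sum_j P1 a j * mc j b' + \sum_k P2 b' k * mc a k) =
  N%:R ^+ 2 * (Y1 xi a * Y2 xi b' - avg w1 xi.1 * avg w2 xi.2).
Proof.
have H := EE_harm (q := fun y => Y1 y a * Y2 y b') (h := fun y => avg w1 y.1 * avg w2 y.2)
            (fun y _ => T0_g12 y) (fun y hy => off_q12 a b' hy).
rewrite -H -EE_scale.
have E : forall y : state N, N%:R ^+ 2 * (Y1 y a * Y2 y b' - \sum_z T0 y z * (Y1 z a * Y2 z b')) =
   (2 * N%:R - 1) * (Y1 y a * Y2 y b') - \sum_j \sum_k P1 a j * P2 b' k * (Y1 y j * Y2 y k)
   - (N%:R - 1) * (\sum_j P1 a j * (Y1 y j * Y2 y b') + \sum_k P2 b' k * (Y1 y a * Y2 y k)).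
  move=> y; rewrite (T0_prod y (fun z => b2r R (z a)) (fun z => b2r R (z b'))) !S_Y //.
  have e1 : \sum_j \sum_k P1 a j * P2 b' k * (Y1 y j * Y2 y k) =
            (\sum_j P1 a j * Y1 y j) * (\sum_k P2 b' k * Y2 y k).
    rewrite big_distrl /=; apply: eq_bigr => j _; rewrite big_distrr /=.
    by apply: eq_bigr => k _; ring.
  have e2 : \sum_j P1 a j * (Y1 y j * Y2 y b') = (\sum_j P1 a j * Y1 y j) * Y2 y b'.
    by rewrite big_distrl /=; apply: eq_bigr => j _; ring.
  have e3 : \sum_k P2 b' k * (Y1 y a * Y2 y k) = Y1 y a * (\sum_k P2 b' k * Y2 y k).
    by rewrite big_distrr /=; apply: eq_bigr => k _; ring.
  rewrite e1 e2 e3; field; by rewrite pnatr_eq0 -lt0n.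
rewrite (EE_ext E) !EE_sub !EE_scale EE_add !EE_sum.
congr (_ - _ - _ * (_ + _)).
- apply: eq_bigr => j _; rewrite EE_sum; apply: eq_bigr => k _; by rewrite EE_scale.
- by apply: eq_bigr => j _; rewrite EE_scale.
- by apply: eq_bigr => k _; rewrite EE_scale.
Qed.
Lemma subE (M1 M2 : 'M[R]_N) i j : (M1 - M2) i j = M1 i j - M2 i j.
Proof. by rewrite !mxE. Qed.

Local Notation pi1 := (statdist w1).

Lemma beta_unique B1 B2 : beta_eqs w1 xi.1 B1 -> beta_eqs w1 xi.1 B2 -> B1 = B2.
Proof.
case=> d1 o1 n1 [d2 o2 n2].
suff : B1 - B2 = 0 by move/eqP; rewrite subr_eq0 => /eqP.
apply: (beta_hom hN hw1).
- move=> i; rewrite subE d1 d2.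
  under [in RHS]eq_bigr do rewrite subE mulrBr.
  rewrite sumrB; ring.
- move=> i j ij; rewrite subE (o1 i j ij) (o2 i j ij).
  under [in RHS]eq_bigr do rewrite subE mulrBr.
  under [X in _ = _ + _ * X]eq_bigr do rewrite subE mulrBr.
  rewrite !sumrB; ring.
- under eq_bigr do rewrite subE mulrBr.
  by rewrite sumrB n1 n2 subrr.
Qed.

Definition kap := \sum_i pi1 i * mm i i.
Definition Bm : 'M[R]_N := \matrix_(i, j) (mm i j - kap).

Lemma Bm_eqs : beta_eqs w1 xi.1 Bm.
Proof.
have nz : (N%:R : R) != 0 by rewrite pnatr_eq0 -lt0n.
split.
- move=> i; rewrite [Bm _ _]mxE.
  under eq_bigr do rewrite [Bm _ _]mxE.
  rewrite (rowsum_sub hw1 _ (fun k => mm k k)).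
  have E := m_diag i.
  rewrite -E; field; by rewrite pnatr_eq0 -lt0n.
- move=> i j ij; rewrite [Bm _ _]mxE.
  under eq_bigr do rewrite [Bm _ _]mxE.
  under [X in _ = _ + _ + _ * X]eq_bigr do rewrite [Bm _ _]mxE.
  rewrite (rowsum_sub hw1 _ (fun k => mm k j)) (rowsum_sub hw1 _ (fun k => mm i k)).
  have := m_off ij => E.
  rewrite -E; field; by rewrite pnatr_eq0 -lt0n.
- under eq_bigr do rewrite [Bm _ _]mxE mulrBr.
  by rewrite sumrB -big_distrl /= statdist_sum1 // mul1r subrr.
Qed.

Lemma beta_is (beta : 'M[R]_N) : beta_eqs w1 xi.1 beta -> beta = Bm.
Proof. by move=> h; apply: beta_unique h Bm_eqs. Qed.

Lemma gamma_unique G1 G2 : gamma_eqs w1 w2 xi G1 -> gamma_eqs w1 w2 xi G2 -> G1 = G2.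
Proof.
case=> e1 n1 [e2 n2].
suff : G1 - G2 = 0 by move/eqP; rewrite subr_eq0 => /eqP.
apply: (gamma_hom hN2 hw1 hw2).
- move=> i j; rewrite subE (e1 i j) (e2 i j).
  have s1 : \sum_(k1 < N) \sum_(k2 < N) P1 i k1 * P2 j k2 * (G1 - G2) k1 k2 =
    \sum_(k1 < N) \sum_(k2 < N) P1 i k1 * P2 j k2 * G1 k1 k2 -
    \sum_(k1 < N) \sum_(k2 < N) P1 i k1 * P2 j k2 * G2 k1 k2.
    rewrite -sumrB; apply: eq_bigr => k1 _; rewrite -sumrB; apply: eq_bigr => k2 _.
    by rewrite subE mulrBr.
  have s2 : \sum_(k < N) P1 i k * (G1 - G2) k j =
     \sum_(k < N) P1 i k * G1 k j - \sum_(k < N) P1 i k * G2 k j.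
    by rewrite -sumrB; apply: eq_bigr => k _; rewrite subE mulrBr.
  have s3 : \sum_(k < N) P2 j k * (G1 - G2) i k =
     \sum_(k < N) P2 j k * G1 i k - \sum_(k < N) P2 j k * G2 i k.
    by rewrite -sumrB; apply: eq_bigr => k _; rewrite subE mulrBr.
  rewrite s1 s2 s3; ring.
- under eq_bigr do rewrite subE mulrBr.
  by rewrite sumrB n1 n2 subrr.
Qed.

Definition kap' := \sum_i pi1 i * mc i i.
Definition Gm : 'M[R]_N := \matrix_(i, j) (mc i j - kap').

Lemma sum_P1P2 i j : \sum_(k1 < N) \sum_(k2 < N) P1 i k1 * P2 j k2 = 1.
Proof.
under eq_bigr do rewrite -big_distrr /= transP_sum1 // mulr1.
exact: transP_sum1.
Qed.

Lemma Gm_eqs : gamma_eqs w1 w2 xi Gm.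
Proof.
have nz : (N%:R : R) != 0 by rewrite pnatr_eq0 -lt0n.
have n2 : (2 : R) <= N%:R by rewrite (ler_nat R 2 N).
have nz2 : 2 * (N%:R : R) - 1 != 0 by rewrite gt_eqF //; lra.
split.
- move=> i j; rewrite [Gm _ _]mxE.
  have s1 : \sum_(k1 < N) \sum_(k2 < N) P1 i k1 * P2 j k2 * Gm k1 k2 =
    \sum_(k1 < N) \sum_(k2 < N) P1 i k1 * P2 j k2 * mc k1 k2 - kap'.
    rewrite -[X in _ - X]mul1r -(sum_P1P2 i j) big_distrl /= -sumrB.
    apply: eq_bigr => k1 _; rewrite big_distrl /= -sumrB; apply: eq_bigr => k2 _.
    by rewrite [Gm _ _]mxE mulrBr.
  have s2 : \sum_(k < N) P1 i k * Gm k j = \sum_(k < N) P1 i k * mc k j - kap'.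
    rewrite -(rowsum_sub hw1); apply: eq_bigr => k _; by rewrite [Gm _ _]mxE.
  have s3 : \sum_(k < N) P2 j k * Gm i k = \sum_(k < N) P2 j k * mc i k - kap'.
    rewrite -(rowsum_sub hw2); apply: eq_bigr => k _; by rewrite [Gm _ _]mxE.
  rewrite s1 s2 s3.
  have E := mc_eq i j.
  apply: (mulfI nz2).
  rewrite -[X in _ = X]subr0 -[X in _ = _ - X](subrr ((2 * N%:R - 1) * mc i j - \sum_(j0 < N) \sum_(k < N) P1 i j0 * P2 j k * mc j0 k -
      (N%:R - 1) * (\sum_(j0 < N) P1 i j0 * mc j0 j + \sum_(k < N) P2 j k * mc i k))).
  rewrite [X in _ = _ - (X - _)]E.
  field.
  by [].
- under eq_bigr do rewrite [Gm _ _]mxE mulrBr.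
  by rewrite sumrB -big_distrl /= statdist_sum1 // mul1r subrr.
Qed.

Lemma gamma_is (gamma : 'M[R]_N) : gamma_eqs w1 w2 xi gamma -> gamma = Gm.
Proof. by move=> h; apply: gamma_unique h Gm_eqs. Qed.
Local Notation P := (transP w1).

Lemma revX n i j : pi1 i * (P ^+ n) i j = pi1 j * (P ^+ n) j i.
Proof.
elim: n i j => [|n IH] i j.
  by rewrite expr0 !mxE; case: (eqVneq i j) => [->|ij]; rewrite ?mulr0 // eq_sym (negbTE ij) mulr0.
rewrite [in LHS]exprSr [in RHS]exprS -!mulmxE !mxE big_distrr big_distrr /=.
apply: eq_bigr => k _.
rewrite mulrA IH.
have := statdist_rev hw1 hN k j.
move: (pi1 k) (pi1 j) (P k j) (P j k) ((P ^+ n) k i) => a1 a2 a3 a4 a5 E.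
by transitivity (a1 * a3 * a5); [ring | rewrite E; ring].
Qed.

Lemma rev_pow m n j k : \sum_i pi1 i * (P ^+ m) i j * (P ^+ n) i k = pi1 j * (P ^+ (m + n)) j k.
Proof.
rewrite exprD -mulmxE mxE big_distrr /=; apply: eq_bigr => i _.
by rewrite revX mulrA.
Qed.

Lemma statE (f : 'I_N -> R) : \sum_i pi1 i * \sum_j P i j * f j = \sum_j pi1 j * f j.
Proof.
under eq_bigr do rewrite big_distrr /=.
rewrite exchange_big /=; apply: eq_bigr => j _.
by under eq_bigr do rewrite mulrA; rewrite -big_distrl /= statdist_stat.
Qed.

Definition Ujk (M M' : 'I_N -> 'I_N -> R) j k :=
  - c * M j k + \sum_l b * P j l * M l k + (r - 1) * M' k j.
Definition Lraw (M M' : 'I_N -> 'I_N -> R) :=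
  \sum_i pi1 i * (\sum_j P i j * Ujk M M' j j - \sum_j \sum_k P i j * P i k * Ujk M M' j k).

Definition CB i j := pi1 i * (- c * (i == j)%:R + b * P i j + c * (P ^+ 2) i j - b * (P ^+ 3) i j).
Definition CG i j := (r - 1) * (pi1 i * ((i == j)%:R - (P ^+ 2) i j)).
Definition Lfun (M M' : 'I_N -> 'I_N -> R) := \sum_i \sum_j (CB i j * M i j + CG i j * M' i j).

Lemma sum2_lin (k : R) (f g : 'I_N -> 'I_N -> R) :
  \sum_i \sum_j (k * f i j + g i j) = k * (\sum_i \sum_j f i j) + \sum_i \sum_j g i j.
Proof.
rewrite big_distrr -big_split /=; apply: eq_bigr => i _.
by rewrite big_distrr -big_split.
Qed.

Lemma sum2_scale (k : R) (f : 'I_N -> 'I_N -> R) :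
  \sum_i \sum_j (k * f i j) = k * (\sum_i \sum_j f i j).
Proof.
rewrite big_distrr /=; apply: eq_bigr => i _.
by rewrite big_distrr.
Qed.

Lemma coefD_eq y i j : coefDx w1 b c r y i j =
  P i j * (payoff w1 b c r y j - \sum_k P i k * payoff w1 b c r y k).
Proof.
have s0 : strength w1 i != 0 by rewrite gt_eqF // strength_gt0.
have -> : \sum_k P i k * payoff w1 b c r y k = Kf w1 b c r y i / strength w1 i.
  rewrite /Kf big_distrl /=; apply: eq_bigr => k _; rewrite /transP mxE; by rewrite mulrAC.
rewrite /coefDx /transP mxE; by field.
Qed.

Lemma L_pt y :
  \sum_i pi1 i * \sum_j coefDx w1 b c r y i j * (Y1 y j - Y1 y i) =
  Lraw (fun j k => Y1 y j * Y1 y k) (fun j k => Y1 y j * Y2 y k).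
Proof.
pose u j := payoff w1 b c r y j.
have Ei : forall i, \sum_j coefDx w1 b c r y i j * (Y1 y j - Y1 y i) =
   \sum_j P i j * (u j * Y1 y j) - \sum_j \sum_k P i j * P i k * (u j * Y1 y k).
  move=> i.
  under eq_bigr do rewrite coefD_eq -/(u _).
  set U := \sum_k P i k * u k.
  have e : forall j, P i j * (u j - U) * (Y1 y j - Y1 y i) =
      P i j * (u j * Y1 y j) + (- Y1 y i) * (P i j * u j) + (- U) * (P i j * Y1 y j)
      + (U * Y1 y i) * P i j by move=> j; ring.
  rewrite (eq_bigr _ (fun j _ => e j)) !big_split /= -!big_distrr /= transP_sum1 //.
  have -> : \sum_j \sum_k P i j * P i k * (u j * Y1 y k) = U * \sum_k P i k * Y1 y k.
    rewrite /U big_distrl /=; apply: eq_bigr => j _; rewrite big_distrr /=.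
    by apply: eq_bigr => k _; ring.
  rewrite /U; ring.
have eu : forall j k, u j * Y1 y k =
    Ujk (fun j k => Y1 y j * Y1 y k) (fun j k => Y1 y j * Y2 y k) j k + Y1 y k.
  move=> j k; rewrite /u /payoff /Ujk !mulrDl big_distrl /=.
  have -> : \sum_i b * P j i * Y1 y i * Y1 y k = \sum_l b * P j l * (Y1 y l * Y1 y k).
    by apply: eq_bigr => l _; rewrite mulrA.
  ring.
rewrite /Lraw; apply: eq_bigr => i _; rewrite Ei; congr (_ * _).
under eq_bigr do rewrite eu mulrDr.
under [X in _ - X = _]eq_bigr do (under eq_bigr do rewrite eu mulrDr; rewrite big_split /=).
rewrite !big_split /=.
have -> : \sum_j \sum_k P i j * P i k * Y1 y k = \sum_j P i j * Y1 y j.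
  under eq_bigr do (under eq_bigr do rewrite -mulrA; rewrite -big_distrr /=).
  by rewrite -big_distrl /= transP_sum1 // mul1r.
ring.
Qed.

Lemma Lraw_eq M M' : Lraw M M' = Lfun M M'.
Proof.
set A1 := \sum_i pi1 i * M i i.
set A2 := \sum_i \sum_j pi1 i * P i j * M i j.
set A3 := \sum_i \sum_j pi1 i * (P ^+ 2) i j * M i j.
set A4 := \sum_i \sum_j pi1 i * (P ^+ 3) i j * M i j.
set A5 := \sum_i pi1 i * M' i i.
set A6 := \sum_i \sum_j pi1 i * (P ^+ 2) i j * M' i j.
have HL : Lfun M M' = - c * A1 + b * A2 + c * A3 - b * A4 + (r - 1) * A5 - (r - 1) * A6.
  rewrite /Lfun.
  have e : forall i j, CB i j * M i j + CG i j * M' i j =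
     (- c) * ((i == j)%:R * (pi1 i * M i j)) + (b * (pi1 i * P i j * M i j) +
     (c * (pi1 i * (P ^+ 2) i j * M i j) + ((- b) * (pi1 i * (P ^+ 3) i j * M i j) +
     ((r - 1) * ((i == j)%:R * (pi1 i * M' i j)) + (- (r - 1)) * (pi1 i * (P ^+ 2) i j * M' i j))))).
    by move=> i j; rewrite /CB /CG; ring.
  rewrite (eq_bigr _ (fun i _ => eq_bigr _ (fun j _ => e i j))).
  rewrite !sum2_lin sum2_scale.
  have d1 : \sum_i \sum_j (i == j)%:R * (pi1 i * M i j) = A1.
    by apply: eq_bigr => i _; rewrite (sum_delta (fun j => pi1 i * M i j)).
  have d2 : \sum_i \sum_j (i == j)%:R * (pi1 i * M' i j) = A5.
    by apply: eq_bigr => i _; rewrite (sum_delta (fun j => pi1 i * M' i j)).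
  rewrite d1 d2 -/A2 -/A3 -/A4 -/A6; ring.
have HR : Lraw M M' = - c * A1 + b * A2 + c * A3 - b * A4 + (r - 1) * A5 - (r - 1) * A6.
  rewrite /Lraw.
  under eq_bigr do rewrite mulrBr.
  rewrite sumrB statE.
  have -> : \sum_i pi1 i * (\sum_j \sum_k P i j * P i k * Ujk M M' j k) =
            \sum_j \sum_k pi1 j * (P ^+ 2) j k * Ujk M M' j k.
    under eq_bigr do rewrite big_distrr /=.
    rewrite exchange_big /=; apply: eq_bigr => j _.
    under eq_bigr do rewrite big_distrr /=.
    rewrite exchange_big /=; apply: eq_bigr => k _.
    rewrite -(rev_pow 1 1) big_distrl /=; apply: eq_bigr => i _.
    by rewrite !expr1; ring.
  rewrite /Ujk.
  under eq_bigr do rewrite !mulrDr.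
  rewrite !big_split /=.
  under [X in _ - X = _]eq_bigr do (under eq_bigr do rewrite !mulrDr; rewrite !big_split /=).
  rewrite !big_split /=.
  have t1 : \sum_j pi1 j * (- c * M j j) = - c * A1.
    by rewrite /A1 big_distrr; apply: eq_bigr => j _ /=; ring.
  have t2 : \sum_j pi1 j * \sum_l b * P j l * M l j = b * A2.
    rewrite /A2 big_distrr /=.
    under eq_bigr do rewrite big_distrr /=.
    rewrite exchange_big /=; apply: eq_bigr => l _; rewrite big_distrr /=; apply: eq_bigr => j _ /=.
    have := statdist_rev hw1 hN j l; move: (pi1 j) (pi1 l) (P j l) (P l j) => a1 a2 a3 a4 E.
    by transitivity (b * (a1 * a3) * M l j); [ring | rewrite E; ring].
  have t3 : \sum_j pi1 j * ((r - 1) * M' j j) = (r - 1) * A5.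
    by rewrite /A5 big_distrr; apply: eq_bigr => j _ /=; ring.
  have t4 : \sum_j \sum_k pi1 j * (P ^+ 2) j k * (- c * M j k) = - c * A3.
    rewrite /A3 big_distrr; apply: eq_bigr => j _ /=; rewrite big_distrr; apply: eq_bigr => k _ /=; ring.
  have t5 : \sum_j \sum_k pi1 j * (P ^+ 2) j k * (\sum_l b * P j l * M l k) = b * A4.
    rewrite /A4 big_distrr /=.
    rewrite exchange_big /=.
    transitivity (\sum_k \sum_l b * (\sum_j pi1 j * (P ^+ 1) j l * (P ^+ 2) j k) * M l k).
      apply: eq_bigr => k _; under eq_bigr do rewrite big_distrr /=.
      rewrite exchange_big /=; apply: eq_bigr => l _.
      rewrite big_distrr big_distrl /=; apply: eq_bigr => j _ /=; rewrite expr1; ring.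
    rewrite exchange_big /=; apply: eq_bigr => l _; rewrite big_distrr /=; apply: eq_bigr => k _.
    by rewrite rev_pow; ring.
  have t6 : \sum_j \sum_k pi1 j * (P ^+ 2) j k * ((r - 1) * M' k j) = (r - 1) * A6.
    rewrite /A6 exchange_big /= big_distrr /=; apply: eq_bigr => k _.
    rewrite big_distrr /=; apply: eq_bigr => j _.
    by rewrite revX; ring.
  rewrite t1 t2 t3 t4 t5 t6; ring.
by rewrite HL HR.
Qed.
Lemma Lfun_atoms M M' : Lfun M M' =
  - c * (\sum_i pi1 i * M i i) + b * (\sum_i \sum_j pi1 i * P i j * M i j)
  + c * (\sum_i \sum_j pi1 i * (P ^+ 2) i j * M i j)
  - b * (\sum_i \sum_j pi1 i * (P ^+ 3) i j * M i j)
  + (r - 1) * (\sum_i pi1 i * M' i i)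
  - (r - 1) * (\sum_i \sum_j pi1 i * (P ^+ 2) i j * M' i j).
Proof.
rewrite /Lfun.
have e : forall i j, CB i j * M i j + CG i j * M' i j =
   (- c) * ((i == j)%:R * (pi1 i * M i j)) + (b * (pi1 i * P i j * M i j) +
   (c * (pi1 i * (P ^+ 2) i j * M i j) + ((- b) * (pi1 i * (P ^+ 3) i j * M i j) +
   ((r - 1) * ((i == j)%:R * (pi1 i * M' i j)) + (- (r - 1)) * (pi1 i * (P ^+ 2) i j * M' i j))))).
  by move=> i j; rewrite /CB /CG; ring.
rewrite (eq_bigr _ (fun i _ => eq_bigr _ (fun j _ => e i j))).
rewrite !sum2_lin sum2_scale.
have d1 : \sum_i \sum_j (i == j)%:R * (pi1 i * M i j) = \sum_i pi1 i * M i i.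
  by apply: eq_bigr => i _; rewrite (sum_delta (fun j => pi1 i * M i j)).
have d2 : \sum_i \sum_j (i == j)%:R * (pi1 i * M' i j) = \sum_i pi1 i * M' i i.
  by apply: eq_bigr => i _; rewrite (sum_delta (fun j => pi1 i * M' i j)).
rewrite d1 d2; ring.
Qed.

Lemma Lfun_shift (M M' : 'I_N -> 'I_N -> R) k k' :
  Lfun (fun i j => M i j + k) (fun i j => M' i j + k') = Lfun M M'.
Proof.
rewrite !Lfun_atoms.
have s1 : forall n, \sum_i \sum_j pi1 i * (P ^+ n) i j * k = k.
  move=> n; under eq_bigr do rewrite -big_distrl /= -big_distrr /= transPX_sum1 // mulr1.
  by rewrite -big_distrl /= statdist_sum1 // mul1r.
have s2 : \sum_i \sum_j pi1 i * P i j * k = k.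
  by rewrite -[RHS](s1 1); apply: eq_bigr => i _; apply: eq_bigr => j _; rewrite expr1.
have s3 : forall n, \sum_i \sum_j pi1 i * (P ^+ n) i j * k' = k'.
  move=> n; under eq_bigr do rewrite -big_distrl /= -big_distrr /= transPX_sum1 // mulr1.
  by rewrite -big_distrl /= statdist_sum1 // mul1r.
have s4 : \sum_i pi1 i * k = k by rewrite -big_distrl /= statdist_sum1 // mul1r.
have s5 : \sum_i pi1 i * k' = k' by rewrite -big_distrl /= statdist_sum1 // mul1r.
under eq_bigr do rewrite mulrDr.
under [X in _ + b * X + _ - _ + _ - _ = _]eq_bigr do (under eq_bigr do rewrite mulrDr; rewrite big_split /=).
under [X in _ + _ + c * X - _ + _ - _ = _]eq_bigr do (under eq_bigr do rewrite mulrDr; rewrite big_split /=).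
under [X in _ + _ + _ - b * X + _ - _ = _]eq_bigr do (under eq_bigr do rewrite mulrDr; rewrite big_split /=).
under [X in _ + _ + _ - _ + (r - 1) * X - _ = _]eq_bigr do rewrite mulrDr.
under [X in _ + _ + _ - _ + _ - (r - 1) * X = _]eq_bigr do (under eq_bigr do rewrite mulrDr; rewrite big_split /=).
rewrite !big_split /= s2 !s1 s4 s5 s3; ring.
Qed.

Lemma Lval_formula : Lval w1 w2 b c r xi = N%:R^-1 * Lfun mm mc.
Proof.
rewrite Lval_v.
have -> : \sum_y vv y * Dprime w1 b c r y =
  EE (fun y => N%:R^-1 * \sum_i pi1 i * \sum_j coefDx w1 b c r y i j * (Y1 y j - Y1 y i)) by [].
rewrite EE_scale; congr (_ * _).
rewrite (EE_ext (fun y => L_pt y)).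
rewrite (EE_ext (fun y => Lraw_eq _ _)) /Lfun EE_sum; apply: eq_bigr => i _.
rewrite EE_sum; apply: eq_bigr => j _.
by rewrite EE_add !EE_scale.
Qed.

Lemma final_value (beta gamma : 'M[R]_N) :
  beta_eqs w1 xi.1 beta -> gamma_eqs w1 w2 xi gamma ->
  Lval w1 w2 b c r xi = N%:R^-1 * (c * theta w1 beta 2 + b * (theta w1 beta 1 - theta w1 beta 3)
                      - (r - 1) * phi w1 w2 gamma 2 0).
Proof.
move=> hb hg.
have Eb := beta_is hb; have Eg := gamma_is hg.
rewrite Lval_formula; congr (_ * _).
have -> : Lfun mm mc = Lfun (fun i j => Bm i j + kap) (fun i j => Gm i j + kap').
  by congr Lfun; apply: funext => i; apply: funext => j; rewrite mxE subrK.
rewrite Lfun_shift -Eb -Eg Lfun_atoms.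
case: hb => _ _ nb; case: hg => _ ng.
rewrite nb ng /theta /phi expr0.
have -> : \sum_i \sum_j pi1 i * (P ^+ 2 *m 1%:M) i j * gamma i j =
          \sum_i \sum_j pi1 i * (P ^+ 2) i j * gamma i j.
  by apply: eq_bigr => i _; apply: eq_bigr => j _; rewrite mulmx1.
have -> : \sum_i \sum_j pi1 i * (P ^+ 1) i j * beta i j =
          \sum_i \sum_j pi1 i * P i j * beta i j.
  by apply: eq_bigr => i _; apply: eq_bigr => j _; rewrite expr1.
ring.
Qed.

End VSec.

Unset Implicit Arguments.

Theorem mainTheorem1 (R : realType) (N : nat) (w1 w2 : 'M[R]_N) (b c r : R)
    (xi : state N) (beta gamma : 'M[R]_N) :
  (2 <= N)%N ->
  weighted_graph w1 -> weighted_graph w2 ->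
  0 <= r ->
  ~ (monomorphic xi.1 /\ monomorphic xi.2) ->
  beta_eqs w1 xi.1 beta ->
  gamma_eqs w1 w2 xi gamma ->
  exists l : R,
    ((fun d : R => d^-1 * (rho1 w1 w2 b c r d xi - rho1 w1 w2 b c r 0 xi))
       @ 0^'+ --> l)
    /\ (0 < l <-> 0 < c * theta w1 beta 2 + b * (theta w1 beta 1 - theta w1 beta 3)
                      - (r - 1) * phi w1 w2 gamma 2 0).
Proof.
move=> hN2 hw1 hw2 _ _ hb hg.
have hN : (0 < N)%N by apply: ltn_trans hN2.
exists (Lval w1 w2 b c r xi); split.
  exact: (main_limit hN hw1 hw2).
rewrite (final_value hN2 hw1 hw2 b c r hb hg) pmulr_rgt0 ?invr_gt0 ?ltr0n //.
Qed.
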